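(* The data $NGr$ defined as follows form a category: objects are nested graphs; a morphism $\mathcal N_1\to\mathcal N_3$ is an equivalence class of pairs $(\kappa,\mu)$ with $\mu:\mathcal N_1\to\mathcal N_2$ a merger and $\kappa:\mathcal N_2\to\mathcal N_3$ a contraction, where two pairs are equivalent if one is obtained from the other by moving an isomorphism of the intermediate nested graph from the merger to the contraction; the composite $(\kappa_2,\mu_2)\circ(\kappa_1,\mu_1)$ is $(\kappa_2\kappa',\mu'\mu_1)$, where $(\kappa',\mu')$ is the canonical decomposition of the admissible epi-functor $\mu_2\kappa_1$; identities are the pairs of identity functors.
   Context: A nested graph is a small category $\mathcal N$ for which there exists at least one functor $G:\mathcal N\to\underline n$ to a finite ordinal $\underline n$ (viewed as the category with a unique morphism $i\to j$ when $i\le j$ and none otherwise) sending every non-identity morphism to a non-identity morphism. Objects are called nodes. A flag is a non-identity morphism, said to be decorated by its domain. A flag is irreducible if it is not a composite of two flags. A vertex of a nested graph is a node that is not the domain of any flag; a corolla is a nested graph with exactly one vertex. A functor $\phi$ contracts a flag $f$ if $\phi(f)$ is an identity. A functor $\phi:\mathcal N_1\to\mathcal N_2$ between nested graphs is admissible if (1) for every irreducible flag $f$ of $\mathcal N_1$, $\phi(f)$ is an identity or an irreducible flag, and (2) for every irreducible flag $f:A\to B$ of $\mathcal N_1$ contracted by $\phi$, $\phi$ contracts every irreducible flag with domain $A$. An epi-functor is a functor whose image generates its codomain. A merger is an admissible epi-functor $\mu:\mathcal N_1\to\mathcal N_2$ such that $\mathcal N_2$ is a quotient of $\mathcal N_1$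 by an equivalence relation on objects. A contraction is an admissible epi-functor $\kappa:\mathcal N_1\to\mathcal N_2$ such that for every node $A_2$ of $\mathcal N_2$ the fiber $\kappa^{-1}(A_2)$ (objects mapped to $A_2$, morphisms mapped to the identity of $A_2$) is a corolla. The canonical decomposition of an admissible epi-functor $\phi:\mathcal N_1\to\mathcal N_2$ is defined as follows: declare distinct nodes $A_1,B_1$ of $\mathcal N_1$ equivalent iff $\phi(A_1)=\phi(B_1)$ and both $A_1$ and $B_1$ are vertices of the fiber $\phi^{-1}(\phi(A_1))$; let $\mathcal N_2'$ be the category obtained from $\mathcal N_1$ by identifying equivalent nodes, with morphisms freely generated by those of $\mathcal N_1$ subject to the composition relations of $\mathcal N_1$; $\mu:\mathcal N_1\to\mathcal N_2'$ is the projection and $\kappa:\mathcal N_2'\to\mathcal N_2$ the induced functor with $\phi=\kappa\mu$ (then $\mathcal N_2'$ is a nested graph, $\mu$ a merger and $\kappa$ a contraction). *)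

(* Defs.v *)
(* small categories, presented "arrows-only" (one type of
   arrows with domain/codomain maps), so that functor equality is plain
   pointwise equality of the object and arrow maps. *)
From Stdlib Require Import Arith.

Record cat : Type := Cat {
  ob : Type;
  ar : Type;
  dom : ar -> ob;
  cod : ar -> ob;
  idm : ob -> ar;
  (* cmp g f = g o f ; meaningful only when cod f = dom g *)
  cmp : ar -> ar -> ar;
  dom_idm : forall A, dom (idm A) = A;
  cod_idm : forall A, cod (idm A) = A;
  dom_cmp : forall g f, cod f = dom g -> dom (cmp g f) = dom f;
  cod_cmp : forall g f, cod f = dom g -> cod (cmp g f) = cod g;
  cmp_id_r : forall f, cmp f (idm (dom f)) = f;
  cmp_id_l : forall f, cmp (idm (cod f)) f = f;
  cmp_assoc : forall h g f, cod f = dom g -> cod g = dom h ->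
                cmp h (cmp g f) = cmp (cmp h g) f
}.

Arguments dom {c} _.
Arguments cod {c} _.
Arguments idm {c} _.
Arguments cmp {c} _ _.

Record functor (C D : cat) : Type := Functor {
  fo : ob C -> ob D;
  fa : ar C -> ar D;
  fa_dom : forall f, dom (fa f) = fo (dom f);
  fa_cod : forall f, cod (fa f) = fo (cod f);
  fa_id : forall A, fa (idm A) = idm (fo A);
  fa_cmp : forall g f, cod f = dom g -> fa (cmp g f) = cmp (fa g) (fa f)
}.

Arguments fo {C D} _ _.
Arguments fa {C D} _ _.

Definition idF (C : cat) : functor C C.
Proof.
  refine (@Functor C C (fun A => A) (fun f => f) _ _ _ _); reflexivity.
Defined.

Definition compF {C D E : cat} (G : functor D E) (F : functor C D) : functor C E.
Proof.
  refine (@Functor C E (fun A => fo G (fo F A)) (fun f => fa G (fa F f)) _ _ _ _).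
  - intro f. rewrite fa_dom, fa_dom. reflexivity.
  - intro f. rewrite fa_cod, fa_cod. reflexivity.
  - intro A. rewrite fa_id, fa_id. reflexivity.
  - intros g f H. rewrite (fa_cmp _ _ F g f H). apply fa_cmp.
    rewrite fa_cod, fa_dom, H. reflexivity.
Defined.

Definition feq {C D : cat} (F G : functor C D) : Prop :=
  (forall A, fo F A = fo G A) /\ (forall f, fa F f = fa G f).

Definition is_iso {C D : cat} (F : functor C D) : Prop :=
  exists G : functor D C, feq (compF G F) (idF C) /\ feq (compF F G) (idF D).

Definition is_id {N : cat} (f : ar N) : Prop := exists A, f = idm A.

(* A functor N -> (finite ordinal n) sending non-identities to
   non-identities is the same as a map g : ob N -> {0..n-1} with
   g(dom f) <= g(cod f) for all f and g(dom f) < g(cod f) for non-identity f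
   (the arrow part of a functor into a poset is forced). *)
Definition nested_graph (N : cat) : Prop :=
  exists (n : nat) (g : ob N -> nat),
    (forall A, g A < n) /\
    (forall f : ar N, g (dom f) <= g (cod f) /\ (~ is_id f -> g (dom f) < g (cod f))).

Definition flag {N : cat} (f : ar N) : Prop := ~ is_id f.

Definition irreducible {N : cat} (f : ar N) : Prop :=
  flag f /\ ~ (exists g h : ar N, flag g /\ flag h /\ cod h = dom g /\ f = cmp g h).

Definition vertex {N : cat} (A : ob N) : Prop :=
  ~ (exists f : ar N, flag f /\ dom f = A).

Definition corolla (N : cat) : Prop :=
  nested_graph N /\ exists v : ob N, vertex v /\ forall w, vertex w -> w = v.

Definition contracts {N1 N2 : cat} (phi : functor N1 N2) (f : ar N1) : Prop :=
  is_id (fa phi f).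

Definition admissible {N1 N2 : cat} (phi : functor N1 N2) : Prop :=
  (forall f : ar N1, irreducible f -> is_id (fa phi f) \/ irreducible (fa phi f)) /\
  (forall f : ar N1, irreducible f -> contracts phi f ->
     forall g : ar N1, irreducible g -> dom g = dom f -> contracts phi g).

Inductive generated {N : cat} (P : ar N -> Prop) : ar N -> Prop :=
| gen_base : forall f, P f -> generated P f
| gen_cmp : forall g f, generated P g -> generated P f -> cod f = dom g ->
            generated P (cmp g f).

Definition epi_functor {N1 N2 : cat} (phi : functor N1 N2) : Prop :=
  forall h : ar N2, generated (fun h' => exists f, fa phi f = h') h.

Definition equivalence_rel {T : Type} (R : T -> T -> Prop) : Prop :=
  (forall x, R x x) /\ (forall x y, R x y -> R y x) /\
  (forall x y z, R x y -> R y z -> R x z).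

(* q : N1 -> N2 exhibits N2 as the quotient of N1 by the relation R on
   objects (universal property of the quotient category: identify the
   R-related objects, morphisms freely generated by those of N1 subject to
   the composition relations of N1). *)
Definition is_quotient_by {N1 N2 : cat} (R : ob N1 -> ob N1 -> Prop)
  (q : functor N1 N2) : Prop :=
  (forall A B, R A B -> fo q A = fo q B) /\
  forall (C : cat) (F : functor N1 C),
    (forall A B, R A B -> fo F A = fo F B) ->
    exists G : functor N2 C, feq (compF G q) F /\
      forall G' : functor N2 C, feq (compF G' q) F -> feq G' G.

Definition merger {N1 N2 : cat} (mu : functor N1 N2) : Prop :=
  admissible mu /\ epi_functor mu /\
  exists R : ob N1 -> ob N1 -> Prop, equivalence_rel R /\ is_quotient_by R mu.

(* A is a vertex of the fiber phi^{-1}(B) (objects mapped to B, morphisms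
   mapped to the identity of B) *)
Definition fiber_vertex {N1 N2 : cat} (phi : functor N1 N2) (B : ob N2) (A : ob N1)
  : Prop :=
  fo phi A = B /\
  ~ (exists f : ar N1, fa phi f = idm B /\ flag f /\ dom f = A).

(* every fiber is a corolla (the fiber is automatically a nested graph,
   being a subcategory of one; "corolla" = exactly one vertex) *)
Definition contraction {N1 N2 : cat} (kappa : functor N1 N2) : Prop :=
  admissible kappa /\ epi_functor kappa /\
  forall B : ob N2, exists v : ob N1,
    fiber_vertex kappa B v /\ forall w, fiber_vertex kappa B w -> w = v.

(* relation of the canonical decomposition (made reflexive) *)
Definition canon_rel {N1 N2 : cat} (phi : functor N1 N2) (A B : ob N1) : Prop :=
  A = B \/
  (fo phi A = fo phi B /\ fiber_vertex phi (fo phi A) A /\ fiber_vertex phi (fo phi A) B).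

Definition canonical_decomposition {N1 N2 N2' : cat} (phi : functor N1 N2)
  (kappa : functor N2' N2) (mu : functor N1 N2') : Prop :=
  is_quotient_by (canon_rel phi) mu /\ feq (compF kappa mu) phi.

Record mpair (N1 N3 : cat) : Type := MPair {
  mid : cat;
  mmu : functor N1 mid;
  mka : functor mid N3
}.

Arguments mid {N1 N3} _.
Arguments mmu {N1 N3} _.
Arguments mka {N1 N3} _.

Definition valid_pair {N1 N3 : cat} (p : mpair N1 N3) : Prop :=
  nested_graph (mid p) /\ merger (mmu p) /\ contraction (mka p).

Definition pair_equiv {N1 N3 : cat} (p q : mpair N1 N3) : Prop :=
  exists phi : functor (mid p) (mid q), is_iso phi /\
    feq (compF phi (mmu p)) (mmu q) /\ feq (mka p) (compF (mka q) phi).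

Definition id_pair (N : cat) : mpair N N := MPair N N N (idF N) (idF N).

Definition comp_pair {N1 N3 N5 : cat} (p1 : mpair N1 N3) (p2 : mpair N3 N5)
  (N' : cat) (kappa' : functor N' (mid p2)) (mu' : functor (mid p1) N')
  : mpair N1 N5 :=
  MPair N1 N5 N' (compF mu' (mmu p1)) (compF (mka p2) kappa').

Definition middle {N1 N3 N5 : cat} (p1 : mpair N1 N3) (p2 : mpair N3 N5)
  : functor (mid p1) (mid p2) := compF (mmu p2) (mka p1).

Definition is_composite {N1 N3 N5 : cat} (p1 : mpair N1 N3) (p2 : mpair N3 N5)
  (r : mpair N1 N5) : Prop :=
  exists (N' : cat) (kappa' : functor N' (mid p2)) (mu' : functor (mid p1) N'),
    canonical_decomposition (middle p1 p2) kappa' mu' /\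
    r = comp_pair p1 p2 N' kappa' mu'.

(* Main.v *)
Require Import Defs.
From Stdlib Require Import Arith Lia List Classical ClassicalEpsilon
  FunctionalExtensionality PropExtensionality ProofIrrelevance.
Import ListNotations.

Lemma feq_refl {C D} (F : functor C D) : feq F F.
Proof. split; reflexivity. Qed.
Lemma feq_sym {C D} (F G : functor C D) : feq F G -> feq G F.
Proof. intros [H1 H2]; split; intros; symmetry; auto. Qed.
Lemma feq_trans {C D} (F G H : functor C D) : feq F G -> feq G H -> feq F H.
Proof. intros [H1 H2] [H3 H4]; split; intros; [rewrite H1|rewrite H2]; auto. Qed.
Lemma feq_comp {C D E} (G G' : functor D E) (F F' : functor C D) :
  feq G G' -> feq F F' -> feq (compF G F) (compF G' F').
Proof.
  intros [H1 H2] [H3 H4]; split; intros; simpl; [rewrite H3|rewrite H4]; auto.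
Qed.

Lemma is_id_eq {N : cat} (f : ar N) : is_id f -> f = idm (dom f).
Proof. intros [A ->]. rewrite dom_idm. reflexivity. Qed.
Lemma is_id_domcod {N : cat} (f : ar N) : is_id f -> dom f = cod f.
Proof. intros [A ->]. rewrite dom_idm, cod_idm. reflexivity. Qed.
Lemma is_id_idm {N : cat} (A : ob N) : is_id (idm A).
Proof. exists A; reflexivity. Qed.
Lemma fa_is_id {C D} (F : functor C D) f : is_id f -> is_id (fa F f).
Proof. intros [A ->]. rewrite fa_id. apply is_id_idm. Qed.

Lemma cmp_idr_eq {N : cat} (g f : ar N) : is_id f -> cod f = dom g -> cmp g f = g.
Proof. intros Hf Hc. rewrite (is_id_eq f Hf). rewrite (is_id_domcod f Hf), Hc. apply cmp_id_r. Qed.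
Lemma cmp_idl_eq {N : cat} (g f : ar N) : is_id g -> cod f = dom g -> cmp g f = f.
Proof. intros Hg Hc. rewrite (is_id_eq g Hg). rewrite <- Hc. apply cmp_id_l. Qed.

Definition rank_fn (N : cat) (n : nat) (g : ob N -> nat) : Prop :=
  (forall A, g A < n) /\
  (forall f : ar N, g (dom f) <= g (cod f) /\ (~ is_id f -> g (dom f) < g (cod f))).

Lemma ng_endo {N : cat} : nested_graph N -> forall f : ar N, dom f = cod f -> is_id f.
Proof.
  intros [n [g [_ Hg]]] f H. apply NNPP; intro Hn.
  destruct (Hg f) as [_ H2]. specialize (H2 Hn). rewrite H in H2. lia.
Qed.

Lemma ng_comp_id {N : cat} : nested_graph N -> forall g f : ar N, cod f = dom g ->
  is_id (cmp g f) -> is_id f /\ is_id g.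
Proof.
  intros HN g f Hc Hid. pose proof HN as [n [r [_ Hr]]].
  apply is_id_domcod in Hid. rewrite dom_cmp, cod_cmp in Hid by auto.
  destruct (Hr f) as [Hf1 Hf2]. destruct (Hr g) as [Hg1 Hg2].
  split; apply NNPP; intro Hn; [apply Hf2 in Hn|apply Hg2 in Hn];
  rewrite Hc in *; rewrite Hid in *; lia.
Qed.

Lemma ng_comp_flag {N : cat} : nested_graph N -> forall g f : ar N, cod f = dom g ->
  ~ is_id f -> ~ is_id (cmp g f).
Proof. intros HN g f Hc Hf Hid. apply (ng_comp_id HN g f Hc) in Hid. tauto. Qed.

Definition img {C D} (F : functor C D) : ar D -> Prop := fun h => exists f, fa F f = h.

Lemma gen_mono {N : cat} (P Q : ar N -> Prop) : (forall h, P h -> Q h) ->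
  forall h, generated P h -> generated Q h.
Proof. intros HPQ h H. induction H; [apply gen_base; auto | apply gen_cmp; auto]. Qed.

Lemma gen_map {A B C} (F : functor A B) (G : functor B C) :
  forall h, generated (img F) h -> generated (img (compF G F)) (fa G h).
Proof.
  intros h H. induction H as [h [f <-]|g f Hg IHg Hf IHf Hc].
  - apply gen_base. exists f. reflexivity.
  - rewrite fa_cmp by auto. apply gen_cmp; auto. rewrite fa_cod, fa_dom, Hc. reflexivity.
Qed.

Lemma gen_dom {A B} (F : functor A B) : forall h, generated (img F) h ->
  exists a, fo F a = dom h.
Proof.
  intros h H. induction H as [h [f <-]|g f Hg IHg Hf IHf Hc].
  - exists (dom f). rewrite fa_dom. reflexivity.
  - rewrite dom_cmp by auto. auto.
Qed.

Lemma epi_surj {A B} (F : functor A B) : epi_functor F -> forall b, exists a, fo F a = b.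
Proof.
  intros HF b. destruct (gen_dom F (idm b) (HF (idm b))) as [a Ha].
  rewrite dom_idm in Ha. eauto.
Qed.

Lemma epi_comp {A B C} (F : functor A B) (G : functor B C) :
  epi_functor F -> epi_functor G -> epi_functor (compF G F).
Proof.
  intros HF HG h. specialize (HG h). induction HG as [h [b <-]|g f Hg IHg Hf IHf Hc].
  - apply gen_map. apply HF.
  - apply gen_cmp; auto.
Qed.

Lemma epi_feq {A B} (F G : functor A B) : feq F G -> epi_functor F -> epi_functor G.
Proof.
  intros [_ H] HF h. apply (gen_mono (img F)); auto.
  intros h' [f <-]. exists f. symmetry. apply H.
Qed.

Lemma lift_first {A B C} (F : functor A B) (H : functor B C) : nested_graph C ->
  forall h, generated (img F) h -> ~ is_id h ->
  exists f, ~ is_id (fa F f) /\ dom (fa F f) = dom h /\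
     (is_id (fa H h) -> is_id (fa H (fa F f))).
Proof.
  intros HC h Hg. induction Hg as [h [f <-]|g f Hg IHg Hf IHf Hc]; intros Hn.
  - exists f. auto.
  - destruct (classic (is_id f)) as [Hi|Hi].
    + rewrite (cmp_idr_eq g f Hi Hc) in *. destruct (IHg Hn) as [x [X1 [X2 X3]]].
      exists x. auto.
    + destruct (IHf Hi) as [x [X1 [X2 X3]]]. exists x. split; auto. split.
      * rewrite dom_cmp by auto. auto.
      * intro HH. apply X3. rewrite fa_cmp in HH by auto.
        apply (ng_comp_id HC) in HH; [tauto|]. rewrite fa_cod, fa_dom, Hc; reflexivity.
Qed.


Lemma first_irred {N : cat} : nested_graph N -> forall f : ar N, ~ is_id f ->
  irreducible f \/ exists i g, irreducible i /\ flag g /\ cod i = dom g /\ f = cmp g i.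
Proof.
  intros HN. pose proof HN as [n [r [_ Hr]]].
  assert (forall m (f : ar N), r (cod f) - r (dom f) <= m -> ~ is_id f ->
    irreducible f \/ exists i g, irreducible i /\ flag g /\ cod i = dom g /\ f = cmp g i);
  [|intros f Hf; eapply H; eauto].
  induction m; intros f Hm Hf.
  - destruct (Hr f) as [_ H2]. specialize (H2 Hf). lia.
  - destruct (classic (irreducible f)) as [H|H]; [left; auto|right].
    unfold irreducible in H. apply not_and_or in H. destruct H as [H|H]; [contradiction|].
    apply NNPP in H. destruct H as [g [h [Fg [Fh [Hc ->]]]]].
    rewrite dom_cmp, cod_cmp in Hm by auto.
    assert (Hm' : r (cod h) - r (dom h) <= m).
    { destruct (Hr g) as [_ H2]. specialize (H2 Fg). destruct (Hr h) as [H3 _]. rewrite Hc in *. lia. }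
    destruct (IHm h Hm' Fh) as [Hi|[i [g' [Hi [Fg' [Hc' ->]]]]]].
    + exists h, g. auto.
    + exists i, (cmp g g'). rewrite cod_cmp in Hc by auto.
      split; auto. split; [apply ng_comp_flag; auto|]. split.
      * rewrite dom_cmp by auto. auto.
      * apply cmp_assoc; auto.
Qed.

Lemma fv_exists {X M} (phi : functor X M) : nested_graph X ->
  forall a, exists v, fiber_vertex phi (fo phi a) v.
Proof.
  intros [n [r [Hb Hr]]].
  assert (forall m a, n - r a <= m -> exists v, fiber_vertex phi (fo phi a) v);
  [|intro a; eapply H; eauto].
  induction m; intros a Hm.
  - specialize (Hb a). lia.
  - destruct (classic (exists f, fa phi f = idm (fo phi a) /\ flag f /\ dom f = a)) as [[f [H1 [H2 H3]]]|Hn].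
    + assert (Hc : fo phi (cod f) = fo phi a).
      { rewrite <- fa_cod, H1, cod_idm. reflexivity. }
      destruct (IHm (cod f)) as [v Hv].
      { destruct (Hr f) as [_ H4]. specialize (H4 H2). rewrite H3 in H4. lia. }
      exists v. rewrite <- Hc. auto.
    + exists a. split; auto.
Qed.

Lemma adm_feq {A B} (F G : functor A B) : feq F G -> admissible F -> admissible G.
Proof.
  intros [_ H] [H1 H2]. unfold admissible, contracts in *. split.
  - intros f Hf. rewrite <- H. auto.
  - intros f Hf Hc g Hg Hd. rewrite <- H in *. eauto.
Qed.

Lemma adm_comp {A B C} (F : functor A B) (G : functor B C) :
  admissible F -> admissible G -> admissible (compF G F).
Proof.
  intros [F1 F2] [G1 G2]. unfold admissible, contracts in *; simpl. split.
  - intros f Hf. destruct (F1 f Hf) as [H|H].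
    + left. apply fa_is_id; auto.
    + apply G1; auto.
  - intros f Hf Hc g Hg Hd. destruct (F1 f Hf) as [H|H].
    + apply fa_is_id. eapply F2; eauto.
    + destruct (F1 g Hg) as [H'|H'].
      * apply fa_is_id; auto.
      * apply (G2 (fa F f) H Hc (fa F g) H'). rewrite !fa_dom, Hd. reflexivity.
Qed.

Lemma ftv {X M} (k : functor X M) : nested_graph X -> nested_graph M -> admissible k ->
  forall B w, (forall u, fiber_vertex k B u -> u = w) ->
  forall h, fo k (dom h) = B -> ~ is_id (fa k h) ->
  exists h', dom h' = w /\ fa k h' = fa k h.
Proof.
  intros HX HM Hk B w Hu. pose proof HX as [n [r [Hb Hr]]].
  assert (forall m h, n - r (dom h) <= m -> fo k (dom h) = B -> ~ is_id (fa k h) ->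
     exists h', dom h' = w /\ fa k h' = fa k h); [|intros h; eapply H; eauto].
  induction m; intros h Hm HB Hh.
  - specialize (Hb (dom h)). lia.
  - destruct (classic (fiber_vertex k B (dom h))) as [Hv|Hv].
    + exists h. split; auto.
    + assert (Hex : exists f, fa k f = idm B /\ flag f /\ dom f = dom h).
      { apply NNPP. intro Hn. apply Hv. split; auto. }
      destruct Hex as [f [Hf1 [Hf2 Hf3]]].
      assert (Hi : exists i, irreducible i /\ dom i = dom h /\ is_id (fa k i)).
      { destruct (first_irred HX f Hf2) as [Hi|[i [g [Hi [Hg [Hc ->]]]]]].
        - exists f. split; auto. split; auto. rewrite Hf1. apply is_id_idm.
        - exists i. split; auto. rewrite dom_cmp in Hf3 by auto. split; auto.
          rewrite fa_cmp in Hf1 by auto.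
          assert (is_id (cmp (fa k g) (fa k i))) by (rewrite Hf1; apply is_id_idm).
          apply (ng_comp_id HM) in H; [tauto|]. rewrite fa_cod, fa_dom, Hc; reflexivity. }
      destruct Hi as [i [Hi [Hid Hic]]].
      assert (Hnh : ~ is_id h) by (intro H; apply Hh; apply fa_is_id; auto).
      destruct (first_irred HX h Hnh) as [Hir|[i' [g' [Hi' [Hg' [Hc' Heq]]]]]].
      * exfalso. apply Hh. destruct Hk as [_ Hk2]. apply (Hk2 i Hi Hic h Hir). symmetry; auto.
      * assert (Hci' : is_id (fa k i')).
        { destruct Hk as [_ Hk2]. apply (Hk2 i Hi Hic i' Hi'). subst h. rewrite dom_cmp in Hid by auto. symmetry; auto. }
        assert (Hkh : fa k h = fa k g').
        { subst h. rewrite fa_cmp by auto. apply cmp_idr_eq; auto.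
          rewrite fa_cod, fa_dom, Hc'. reflexivity. }
        destruct (IHm g') as [h' [H1 H2]].
        ** destruct (Hr i') as [_ H4]. specialize (H4 (proj1 Hi')).
          rewrite <- Hc'. subst h. rewrite dom_cmp in Hm by auto. lia.
        ** rewrite <- Hc'. rewrite <- fa_cod, <- (is_id_domcod _ Hci'), fa_dom.
          subst h. rewrite dom_cmp in HB by auto. auto.
        ** rewrite <- Hkh. auto.
        ** exists h'. split; auto. rewrite H2. auto.
Qed.

Definition natmon : cat.
Proof.
  refine (@Cat unit nat (fun _ => tt) (fun _ => tt) (fun _ => 0) (fun g f => g + f) _ _ _ _ _ _ _);
  intros; try (destruct A; reflexivity); try reflexivity; lia.
Defined.

Definition rankF {X : cat} (r : ob X -> nat) (Hr : forall f : ar X, r (dom f) <= r (cod f))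
  : functor X natmon.
Proof.
  refine (@Functor X natmon (fun _ => tt) (fun f => r (cod f) - r (dom f)) _ _ _ _);
  intros; try reflexivity.
  - rewrite dom_idm, cod_idm. simpl. lia.
  - simpl. rewrite dom_cmp, cod_cmp by auto. pose proof (Hr f). pose proof (Hr g).
    rewrite H in *. lia.
Defined.

Lemma quot_noncontract {X Y} (R : ob X -> ob X -> Prop) (q : functor X Y) :
  nested_graph X -> is_quotient_by R q -> forall f, is_id (fa q f) -> is_id f.
Proof.
  intros [n [r [_ Hr]]] [_ Hq] f Hf.
  assert (Hr1 : forall f : ar X, r (dom f) <= r (cod f)) by (intro g; apply Hr).
  destruct (Hq natmon (rankF r Hr1)) as [G [[_ HG] _]]; [reflexivity|].
  specialize (HG f). simpl in HG. rewrite (is_id_eq _ Hf), fa_id in HG. simpl in HG.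
  apply NNPP. intro Hn. destruct (Hr f) as [_ H2]. specialize (H2 Hn). lia.
Qed.

Definition indisc (T : Type) : cat.
Proof.
  refine (@Cat T (T * T) fst snd (fun A => (A, A)) (fun g f => (fst f, snd g)) _ _ _ _ _ _ _);
  intros; try reflexivity; destruct f; reflexivity.
Defined.

Definition indiscF {X : cat} (R : ob X -> ob X -> Prop) : functor X (indisc (ob X -> Prop)).
Proof.
  refine (@Functor X (indisc (ob X -> Prop)) (fun a => R a) (fun f => (R (dom f), R (cod f))) _ _ _ _);
  intros; simpl; try reflexivity.
  - rewrite dom_idm, cod_idm. reflexivity.
  - rewrite dom_cmp, cod_cmp by auto. reflexivity.
Defined.

Lemma equiv_fun {T} (R : T -> T -> Prop) : equivalence_rel R -> forall a b, R a b -> R a = R b.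
Proof.
  intros [Hr [Hs Ht]] a b H. apply functional_extensionality. intro c.
  apply propositional_extensionality. split; intro; eauto.
Qed.

Lemma quot_kernel {X Y} R (q : functor X Y) : equivalence_rel R -> is_quotient_by R q ->
  forall a b, fo q a = fo q b <-> R a b.
Proof.
  intros HR [H1 H2] a b. split; [|auto].
  intro H. destruct (H2 _ (indiscF R)) as [G [[HG _] _]].
  { intros. apply equiv_fun; auto. }
  pose proof (HG a) as Ha. pose proof (HG b) as Hb. simpl in Ha, Hb.
  rewrite H in Ha. rewrite Ha in Hb. rewrite Hb. apply (proj1 HR).
Qed.

Lemma feq_assoc {A B C D} (H : functor C D) (G : functor B C) (F : functor A B) :
  feq (compF H (compF G F)) (compF (compF H G) F).
Proof. split; intros; reflexivity. Qed.
Lemma feq_idl {A B} (F : functor A B) : feq (compF (idF B) F) F.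
Proof. split; intros; reflexivity. Qed.
Lemma feq_idr {A B} (F : functor A B) : feq (compF F (idF A)) F.
Proof. split; intros; reflexivity. Qed.

Lemma quot_factor {X Y Z} R (q : functor X Y) (F : functor X Z) : is_quotient_by R q ->
  (forall a b, R a b -> fo F a = fo F b) -> exists G, feq (compF G q) F.
Proof. intros [_ H] HF. destruct (H _ F HF) as [G [HG _]]. eauto. Qed.

Lemma quot_unique {X Y Z} R (q : functor X Y) (G1 G2 : functor Y Z) : is_quotient_by R q ->
  feq (compF G1 q) (compF G2 q) -> feq G1 G2.
Proof.
  intros [H1 H2] He. destruct (H2 _ (compF G2 q)) as [G [HG HU]].
  { intros a b Hab. simpl. rewrite (H1 a b Hab). reflexivity. }
  apply feq_trans with G; auto. apply feq_sym. apply HU. apply feq_refl.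
Qed.

Lemma pair_equiv_of {N1 N3} (r r' : mpair N1 N3) R R' :
  is_quotient_by R (mmu r) -> is_quotient_by R' (mmu r') -> (forall a b, R a b <-> R' a b) ->
  feq (compF (mka r) (mmu r)) (compF (mka r') (mmu r')) -> pair_equiv r r'.
Proof.
  intros Hq Hq' HRR Ht.
  destruct (quot_factor R (mmu r) (mmu r') Hq) as [psi Hpsi].
  { intros a b H. apply (proj1 Hq'). apply HRR; auto. }
  destruct (quot_factor R' (mmu r') (mmu r) Hq') as [psi' Hpsi'].
  { intros a b H. apply (proj1 Hq). apply HRR; auto. }
  exists psi. split; [|split; auto].
  - exists psi'. split.
    + apply (quot_unique R (mmu r)); auto.
      apply feq_trans with (compF psi' (compF psi (mmu r))); [apply feq_sym, feq_assoc|].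
      apply feq_trans with (compF psi' (mmu r')); [apply feq_comp; auto; apply feq_refl|].
      apply feq_trans with (mmu r); auto. apply feq_sym, feq_idl.
    + apply (quot_unique R' (mmu r')); auto.
      apply feq_trans with (compF psi (compF psi' (mmu r'))); [apply feq_sym, feq_assoc|].
      apply feq_trans with (compF psi (mmu r)); [apply feq_comp; auto; apply feq_refl|].
      apply feq_trans with (mmu r'); auto. apply feq_sym, feq_idl.
  - apply (quot_unique R (mmu r)); auto.
    apply feq_trans with (compF (mka r') (mmu r')); auto.
    apply feq_trans with (compF (mka r') (compF psi (mmu r))); [|apply feq_assoc].
    apply feq_comp; [apply feq_refl|]. apply feq_sym; auto.
Qed.

Lemma quot_comp {X Y Z} R1 R2 (q1 : functor X Y) (q2 : functor Y Z) :
  is_quotient_by R1 q1 -> epi_functor q1 -> (forall y, R2 y y) -> is_quotient_by R2 q2 ->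
  is_quotient_by (fun a b => R2 (fo q1 a) (fo q1 b)) (compF q2 q1).
Proof.
  intros [A1 B1] He Hrefl [A2 B2]. split.
  - intros a b H. simpl. apply A2. auto.
  - intros C F HF.
    destruct (B1 C F) as [G1 [HG1 HU1]].
    { intros a b H. apply HF. rewrite (A1 a b H). apply Hrefl. }
    destruct (B2 C G1) as [G2 [HG2 HU2]].
    { intros y y' H. destruct (epi_surj q1 He y) as [a <-]. destruct (epi_surj q1 He y') as [b <-].
      destruct HG1 as [HG1 _]. simpl in HG1. rewrite !HG1. apply HF. auto. }
    exists G2. split.
    + apply feq_trans with (compF (compF G2 q2) q1); [apply feq_assoc|].
      apply feq_trans with (compF G1 q1); auto. apply feq_comp; auto. apply feq_refl.
    + intros G' HG'. apply HU2. apply HU1. auto.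
Qed.


Section Quot.
Variable X : cat.
Variable R : ob X -> ob X -> Prop.
Hypothesis HR : equivalence_rel R.
Variable d : ob X -> nat.
Variable nb : nat.
Hypothesis Hdb : forall a, d a < nb.
Hypothesis Hd : forall f : ar X, d (dom f) <= d (cod f) /\ (~ is_id f -> d (dom f) < d (cod f)).
Hypothesis HdR : forall a b, R a b -> d a = d b.

Lemma Rrefl a : R a a. Proof. apply (proj1 HR). Qed.
Lemma Rsym a b : R a b -> R b a. Proof. apply (proj1 (proj2 HR)). Qed.
Lemma Rtrans a b c : R a b -> R b c -> R a c. Proof. apply (proj2 (proj2 HR)). Qed.

Lemma nid_comp (g f : ar X) : cod f = dom g -> ~ is_id f -> ~ is_id (cmp g f).
Proof.
  intros Hc Hf Hi. apply is_id_domcod in Hi. rewrite dom_cmp, cod_cmp in Hi by auto.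
  destruct (Hd f) as [_ H1]. specialize (H1 Hf). destruct (Hd g) as [H2 _].
  rewrite Hc, Hi in *. lia.
Qed.

Definition obQ := {P : ob X -> Prop | exists a, P = R a}.
Definition cls (a : ob X) : obQ := exist _ (R a) (ex_intro _ a eq_refl).
Lemma obQ_eq (x y : obQ) : proj1_sig x = proj1_sig y -> x = y.
Proof. destruct x, y; simpl; intro; subst; f_equal; apply proof_irrelevance. Qed.
Lemma cls_eq a b : cls a = cls b <-> R a b.
Proof.
  split; intro H.
  - apply (f_equal (@proj1_sig _ _)) in H. simpl in H. rewrite H. apply Rrefl.
  - apply obQ_eq. simpl. apply equiv_fun; auto.
Qed.
Definition rep (c : obQ) : ob X := proj1_sig (constructive_indefinite_description _ (proj2_sig c)).
Lemma rep_spec c : cls (rep c) = c.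
Proof.
  unfold rep. destruct (constructive_indefinite_description _ _) as [a Ha]. simpl.
  apply obQ_eq. simpl. auto.
Qed.
Lemma R_rep a : R (rep (cls a)) a.
Proof. apply cls_eq. apply rep_spec. Qed.

Fixpoint wlast (f : ar X) (l : list (ar X)) : ar X :=
  match l with [] => f | g :: l' => wlast g l' end.
Fixpoint chainv (f : ar X) (l : list (ar X)) : Prop :=
  ~ is_id f /\ match l with [] => True | g :: l' => R (cod f) (dom g) /\ cod f <> dom g /\ chainv g l' end.
Fixpoint wcomp (f : ar X) (l : list (ar X)) (g : ar X) (l2 : list (ar X)) : ar X * list (ar X) :=
  match l with
  | [] => if excluded_middle_informative (cod f = dom g) then (cmp g f, l2) else (f, g :: l2)
  | f' :: l' => (f, fst (wcomp f' l' g l2) :: snd (wcomp f' l' g l2))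
  end.

Lemma wcomp_dom f l g l2 : dom (fst (wcomp f l g l2)) = dom f.
Proof.
  destruct l; simpl; auto. destruct (excluded_middle_informative _); simpl; auto.
  apply dom_cmp; auto.
Qed.

Lemma wlast_cod_eq x y l : cod x = cod y -> cod (wlast x l) = cod (wlast y l).
Proof. destruct l; simpl; auto. Qed.

Lemma wcomp_cod f l g l2 : cod (wlast (fst (wcomp f l g l2)) (snd (wcomp f l g l2))) = cod (wlast g l2).
Proof.
  revert f. induction l as [|f' l' IH]; intros f; simpl.
  - destruct (excluded_middle_informative _); simpl; auto.
    apply wlast_cod_eq. apply cod_cmp; auto.
  - apply IH.
Qed.

Lemma wcomp_merge f g l2 h l3 : cod f = dom g ->
  wcomp (cmp g f) l2 h l3 = (cmp (fst (wcomp g l2 h l3)) f, snd (wcomp g l2 h l3)).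
Proof.
  intros Hc. destruct l2; simpl; auto.
  rewrite cod_cmp by auto.
  destruct (excluded_middle_informative (cod g = dom h)); simpl; auto.
  rewrite cmp_assoc; auto.
Qed.

Lemma wcomp_assoc l f g l2 h l3 :
  wcomp (fst (wcomp f l g l2)) (snd (wcomp f l g l2)) h l3 =
  wcomp f l (fst (wcomp g l2 h l3)) (snd (wcomp g l2 h l3)).
Proof.
  revert f. induction l as [|f' l' IH]; intros f.
  - simpl. rewrite wcomp_dom.
    destruct (excluded_middle_informative (cod f = dom g)) as [E|E]; simpl.
    + apply wcomp_merge; auto.
    + reflexivity.
  - simpl. rewrite IH. reflexivity.
Qed.

Lemma chainv_head x g l2 : chainv g l2 -> ~ is_id x -> cod x = cod g -> chainv x l2.
Proof. destruct l2; simpl; intros [H1 H2] H3 H4; split; auto. rewrite H4; auto. Qed.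

Lemma chainv_wcomp l f g l2 : chainv f l -> chainv g l2 -> R (cod (wlast f l)) (dom g) ->
  chainv (fst (wcomp f l g l2)) (snd (wcomp f l g l2)).
Proof.
  revert f. induction l as [|f' l' IH]; intros f Hf Hg HR'.
  - simpl in *. destruct (excluded_middle_informative (cod f = dom g)) as [E|E]; simpl.
    + apply chainv_head with g; auto.
      * apply nid_comp; auto. apply Hf.
      * apply cod_cmp; auto.
    + split; [apply Hf|]. split; auto.
  - simpl in *. destruct Hf as [H1 [H2 [H3 H4]]]. split; auto. rewrite wcomp_dom.
    split; auto.
Qed.

Lemma chain_d f l : chainv f l -> d (dom f) < d (cod (wlast f l)).
Proof.
  revert f. induction l as [|g l IH]; intros f Hf; simpl in *.
  - apply Hd. apply Hf.
  - destruct Hf as [H1 [H2 [H3 H4]]]. specialize (IH g H4).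
    destruct (Hd f) as [_ H5]. specialize (H5 H1). apply HdR in H2. lia.
Qed.

Lemma wcomp_single h lh g lg : snd (wcomp h lh g lg) = [] ->
  lh = [] /\ cod h = dom g /\ fst (wcomp h lh g lg) = cmp g h /\ lg = [].
Proof.
  destruct lh; simpl; [|discriminate].
  destruct (excluded_middle_informative (cod h = dom g)); simpl; [|discriminate].
  intros ->. auto.
Qed.

Inductive qraw : Type := QId (c : obQ) | QW (f : ar X) (l : list (ar X)).
Definition qvalid (w : qraw) : Prop := match w with QId _ => True | QW f l => chainv f l end.
Definition arQ := sig qvalid.
Definition rdom (w : qraw) : obQ := match w with QId c => c | QW f l => cls (dom f) end.
Definition rcod (w : qraw) : obQ := match w with QId c => c | QW f l => cls (cod (wlast f l)) end.
Definition rcmp (w2 w1 : qraw) : qraw :=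
  match w1 with
  | QId _ => w2
  | QW f l => match w2 with
              | QId _ => w1
              | QW g l2 => if excluded_middle_informative (R (cod (wlast f l)) (dom g))
                           then QW (fst (wcomp f l g l2)) (snd (wcomp f l g l2)) else w1
              end
  end.

Lemma rcmp_valid w2 w1 : qvalid w2 -> qvalid w1 -> qvalid (rcmp w2 w1).
Proof.
  destruct w1 as [c|f l]; simpl; auto. destruct w2 as [c'|g l2]; simpl; auto.
  destruct (excluded_middle_informative _); simpl; auto. intros. apply chainv_wcomp; auto.
Qed.

Lemma rdom_rcmp w2 w1 : rcod w1 = rdom w2 -> rdom (rcmp w2 w1) = rdom w1.
Proof.
  destruct w1 as [c|f l]; destruct w2 as [c'|g l2]; simpl; auto.
  destruct (excluded_middle_informative _); simpl; auto. rewrite wcomp_dom. auto.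
Qed.

Lemma rcod_rcmp w2 w1 : rcod w1 = rdom w2 -> rcod (rcmp w2 w1) = rcod w2.
Proof.
  destruct w1 as [c|f l]; destruct w2 as [c'|g l2]; simpl; auto.
  intro H. destruct (excluded_middle_informative _) as [E|E]; simpl.
  - rewrite wcomp_cod. auto.
  - exfalso. apply E. apply cls_eq. auto.
Qed.

Lemma rcmp_word w2 f l : exists f' l', rcmp w2 (QW f l) = QW f' l'.
Proof.
  destruct w2; simpl; eauto. destruct (excluded_middle_informative _); eauto.
Qed.

Lemma rcmp_assoc w3 w2 w1 : rcod w1 = rdom w2 -> rcod w2 = rdom w3 ->
  rcmp w3 (rcmp w2 w1) = rcmp (rcmp w3 w2) w1.
Proof.
  intros H12 H23. destruct w1 as [c1|f l]; [reflexivity|].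
  destruct w2 as [c2|g l2]; [reflexivity|].
  destruct w3 as [c3|h l3].
  - destruct (rcmp_word (QW g l2) f l) as [f' [l' E]]. rewrite E. simpl. rewrite <- E. reflexivity.
  - simpl in *. apply cls_eq in H12. apply cls_eq in H23.
    destruct (excluded_middle_informative (R (cod (wlast f l)) (dom g))) as [_|E]; [|tauto].
    destruct (excluded_middle_informative (R (cod (wlast g l2)) (dom h))) as [_|E]; [|tauto].
    simpl. rewrite wcomp_cod, wcomp_dom.
    destruct (excluded_middle_informative (R (cod (wlast g l2)) (dom h))) as [_|E]; [|tauto].
    destruct (excluded_middle_informative (R (cod (wlast f l)) (dom g))) as [_|E]; [|tauto].
    rewrite wcomp_assoc. reflexivity.
Qed.

Lemma arQ_eq (x y : arQ) : proj1_sig x = proj1_sig y -> x = y.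
Proof. destruct x, y; simpl; intro; subst; f_equal; apply proof_irrelevance. Qed.

Definition Qcat : cat.
Proof.
  refine (@Cat obQ arQ (fun w => rdom (proj1_sig w)) (fun w => rcod (proj1_sig w))
    (fun c => exist _ (QId c) I)
    (fun g f => exist _ (rcmp (proj1_sig g) (proj1_sig f)) (rcmp_valid _ _ (proj2_sig g) (proj2_sig f)))
    _ _ _ _ _ _ _).
  - reflexivity.
  - reflexivity.
  - intros g f H. simpl. apply rdom_rcmp; auto.
  - intros g f H. simpl. apply rcod_rcmp; auto.
  - intros f. apply arQ_eq. simpl. reflexivity.
  - intros f. apply arQ_eq. simpl. destruct (proj1_sig f); reflexivity.
  - intros h g f H1 H2. apply arQ_eq. simpl. apply rcmp_assoc; auto.
Defined.

Lemma Qis_id (w : ar Qcat) : is_id w <-> exists c, proj1_sig w = QId c.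
Proof.
  split.
  - intros [c ->]. exists c. reflexivity.
  - intros [c Hc]. exists c. apply arQ_eq. simpl. auto.
Qed.

Definition qa (f : ar X) : arQ :=
  match excluded_middle_informative (is_id f) with
  | left _ => exist _ (QId (cls (dom f))) I
  | right H => exist qvalid (QW f []) (conj H I)
  end.
Lemma qa_id f : is_id f -> proj1_sig (qa f) = QId (cls (dom f)).
Proof. unfold qa. destruct (excluded_middle_informative _); simpl; tauto. Qed.
Lemma qa_nid f : ~ is_id f -> proj1_sig (qa f) = QW f [].
Proof. unfold qa. destruct (excluded_middle_informative _); simpl; tauto. Qed.

Definition qF : functor X Qcat.
Proof.
  refine (@Functor X Qcat cls qa _ _ _ _).
  - intros f. simpl. destruct (classic (is_id f)) as [H|H];
    [rewrite qa_id|rewrite qa_nid]; auto.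
  - intros f. simpl. destruct (classic (is_id f)) as [H|H];
    [rewrite qa_id|rewrite qa_nid]; auto. simpl. rewrite (is_id_domcod f H). auto.
  - intros A. apply arQ_eq. simpl. rewrite qa_id by apply is_id_idm. rewrite dom_idm. auto.
  - intros g f Hc. apply arQ_eq. simpl.
    destruct (classic (is_id f)) as [Hf|Hf].
    + rewrite (cmp_idr_eq g f Hf Hc). rewrite (qa_id f Hf). reflexivity.
    + destruct (classic (is_id g)) as [Hg|Hg].
      * rewrite (cmp_idl_eq g f Hg Hc). rewrite (qa_id g Hg), (qa_nid f Hf). reflexivity.
      * rewrite (qa_nid f Hf), (qa_nid g Hg), qa_nid by (apply nid_comp; auto). simpl.
        destruct (excluded_middle_informative (R (cod f) (dom g))) as [_|E];
        [|exfalso; apply E; rewrite Hc; apply Rrefl].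
        destruct (excluded_middle_informative (cod f = dom g)); [reflexivity|tauto].
Defined.

Lemma qF_is_id f : is_id (fa qF f) -> is_id f.
Proof.
  intro H. apply NNPP. intro Hn. apply Qis_id in H. destruct H as [c Hc].
  simpl in Hc. rewrite qa_nid in Hc by auto. discriminate.
Qed.

Lemma word_decomp f g l' (p : qvalid (QW f (g :: l'))) (p' : qvalid (QW g l')) :
  (exist qvalid (QW f (g :: l')) p : ar Qcat) = cmp (exist qvalid (QW g l') p' : ar Qcat) (fa qF f).
Proof.
  apply arQ_eq. simpl. destruct p as [H1 [H2 [H3 H4]]]. rewrite qa_nid by auto. simpl.
  destruct (excluded_middle_informative (R (cod f) (dom g))) as [_|E]; [|tauto].
  destruct (excluded_middle_informative (cod f = dom g)); [tauto|reflexivity].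
Qed.

Lemma qF_epi : epi_functor qF.
Proof.
  intros [w p]. destruct w as [c|f l].
  - apply gen_base. exists (idm (rep c)). apply arQ_eq. simpl.
    rewrite qa_id by apply is_id_idm. rewrite dom_idm, rep_spec. reflexivity.
  - revert f p. induction l as [|g l' IH]; intros f p.
    + apply gen_base. exists f. apply arQ_eq. simpl. apply qa_nid. apply p.
    + assert (p' : qvalid (QW g l')) by apply p.
      rewrite (word_decomp f g l' p p'). apply gen_cmp.
      * apply IH.
      * apply gen_base. exists f. reflexivity.
      * simpl. destruct p as [H1 [H2 [H3 H4]]]. rewrite qa_nid by auto. simpl. apply cls_eq. auto.
Qed.

Lemma Q_nested : nested_graph Qcat.
Proof.
  exists nb, (fun c => d (rep c)). split; [intro; apply Hdb|].
  intros [w p]. destruct w as [c|f l]; simpl.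
  - split; auto. intro H. exfalso. apply H. apply Qis_id. exists c. reflexivity.
  - rewrite (HdR _ _ (R_rep (dom f))), (HdR _ _ (R_rep (cod (wlast f l)))).
    pose proof (chain_d f l p). split; auto. lia.
Qed.

Lemma qF_irred f : irreducible f -> irreducible (fa qF f).
Proof.
  intros [Hf Hn]. split.
  - intro H. apply Hf. apply qF_is_id. auto.
  - intros [G [H [FG [FH [Hc Heq]]]]]. apply Hn.
    destruct G as [wg pg], H as [wh ph].
    destruct wg as [cg|g lg]; [exfalso; apply FG; apply Qis_id; exists cg; reflexivity|].
    destruct wh as [ch|h lh]; [exfalso; apply FH; apply Qis_id; exists ch; reflexivity|].
    apply (f_equal (@proj1_sig _ _)) in Heq. simpl in Heq, Hc. rewrite qa_nid in Heq by auto.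
    apply cls_eq in Hc.
    destruct (excluded_middle_informative _) as [_|E]; [|tauto].
    injection Heq. intros E1 E2.
    destruct (wcomp_single h lh g lg (eq_sym E1)) as [-> [Hc' [E3 ->]]].
    exists g, h. split; [apply pg|]. split; [apply ph|]. split; auto. rewrite E2, E3. auto.
Qed.

Lemma Q_irred_char (W : ar Qcat) : irreducible W -> exists f, irreducible f /\ W = fa qF f.
Proof.
  intros [HW Hn]. destruct W as [w p]. destruct w as [c|f l].
  - exfalso. apply HW. apply Qis_id. exists c; reflexivity.
  - destruct l as [|g l'].
    + exists f. assert (Hf : ~ is_id f) by apply p.
      assert (E : (exist qvalid (QW f []) p : ar Qcat) = fa qF f)
        by (apply arQ_eq; simpl; rewrite qa_nid; auto).
      split; auto. split; auto. intros [g [h [Fg [Fh [Hc ->]]]]].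
      apply Hn. exists (fa qF g), (fa qF h). rewrite E. rewrite fa_cmp by auto.
      split; [intro; apply Fg; apply qF_is_id; auto|].
      split; [intro; apply Fh; apply qF_is_id; auto|].
      split; auto. rewrite fa_cod, fa_dom, Hc. auto.
    + exfalso. apply Hn. assert (p' : qvalid (QW g l')) by apply p.
      exists (exist qvalid (QW g l') p'), (fa qF f).
      destruct p as [H1 [H2 [H3 H4]]] eqn:Ep.
      split; [intro H; apply Qis_id in H; destruct H; discriminate|].
      split; [intro H; apply H1; apply qF_is_id; auto|].
      split; [simpl; rewrite qa_nid by auto; simpl; apply cls_eq; auto|].
      rewrite <- Ep. apply word_decomp.
Qed.

Section Lift.
Variable C : cat.
Variable F : functor X C.
Hypothesis HF : forall a b, R a b -> fo F a = fo F b.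

Definition Go (c : obQ) : ob C := fo F (rep c).
Fixpoint wF (f : ar X) (l : list (ar X)) : ar C :=
  match l with [] => fa F f | g :: l' => cmp (wF g l') (fa F f) end.
Definition Gr (w : qraw) : ar C := match w with QId c => idm (Go c) | QW f l => wF f l end.

Lemma Go_cls a : Go (cls a) = fo F a.
Proof. unfold Go. apply HF. apply R_rep. Qed.

Lemma wF_domcod f l : chainv f l -> dom (wF f l) = fo F (dom f) /\ cod (wF f l) = fo F (cod (wlast f l)).
Proof.
  revert f. induction l as [|g l' IH]; intros f Hf; simpl.
  - rewrite fa_dom, fa_cod. auto.
  - destruct Hf as [H1 [H2 [H3 H4]]]. destruct (IH g H4) as [E1 E2].
    assert (Hc : cod (fa F f) = dom (wF g l')) by (rewrite fa_cod, E1; apply HF; auto).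
    rewrite dom_cmp, cod_cmp by auto. rewrite fa_dom. auto.
Qed.

Lemma wF_merge f g l2 : cod f = dom g -> chainv g l2 -> wF (cmp g f) l2 = cmp (wF g l2) (fa F f).
Proof.
  intros Hc Hg. destruct l2 as [|x t]; simpl.
  - apply fa_cmp; auto.
  - destruct Hg as [H1 [H2 [H3 H4]]]. rewrite fa_cmp by auto.
    apply cmp_assoc.
    + rewrite fa_cod, fa_dom, Hc. auto.
    + rewrite fa_cod. rewrite (proj1 (wF_domcod x t H4)). apply HF; auto.
Qed.

Lemma wF_wcomp l f g l2 : chainv f l -> chainv g l2 -> R (cod (wlast f l)) (dom g) ->
  wF (fst (wcomp f l g l2)) (snd (wcomp f l g l2)) = cmp (wF g l2) (wF f l).
Proof.
  revert f. induction l as [|f' l' IH]; intros f Hf Hg HR'.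
  - simpl in *. destruct (excluded_middle_informative (cod f = dom g)) as [E|E]; simpl.
    + apply wF_merge; auto.
    + reflexivity.
  - simpl in *. destruct Hf as [H1 [H2 [H3 H4]]]. rewrite IH by auto.
    symmetry. apply cmp_assoc.
    + rewrite fa_cod, (proj1 (wF_domcod f' l' H4)). apply HF; auto.
    + rewrite (proj2 (wF_domcod f' l' H4)), (proj1 (wF_domcod g l2 Hg)). apply HF; auto.
Qed.

Lemma Gr_domcod w : qvalid w -> dom (Gr w) = Go (rdom w) /\ cod (Gr w) = Go (rcod w).
Proof.
  destruct w as [c|f l]; simpl; intro Hw.
  - rewrite dom_idm, cod_idm. auto.
  - rewrite !Go_cls. apply wF_domcod; auto.
Qed.

Definition liftF : functor Qcat C.
Proof.
  refine (@Functor Qcat C Go (fun w => Gr (proj1_sig w)) _ _ _ _).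
  - intros [w p]. simpl. apply Gr_domcod; auto.
  - intros [w p]. simpl. apply Gr_domcod; auto.
  - intros c. reflexivity.
  - intros [w2 p2] [w1 p1] Hc. simpl in *.
    destruct w1 as [c1|f l]; simpl.
    + symmetry. simpl in Hc. rewrite Hc. rewrite <- (proj1 (Gr_domcod w2 p2)). apply cmp_id_r.
    + destruct w2 as [c2|g l2]; simpl.
      * symmetry. change c2 with (rdom (QId c2)). rewrite <- Hc.
        rewrite <- (proj2 (Gr_domcod (QW f l) p1)). apply cmp_id_l.
      * simpl in Hc. apply cls_eq in Hc.
        destruct (excluded_middle_informative _) as [_|E]; [|tauto]. simpl.
        apply wF_wcomp; auto.
Defined.

Lemma liftF_feq : feq (compF liftF qF) F.
Proof.
  split.
  - intros a. simpl. apply Go_cls.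
  - intros f. simpl. destruct (classic (is_id f)) as [H|H].
    + rewrite qa_id by auto. simpl. rewrite Go_cls. rewrite (is_id_eq f H) at 2. rewrite fa_id. auto.
    + rewrite qa_nid by auto. reflexivity.
Qed.

Lemma liftF_unique (G' : functor Qcat C) : feq (compF G' qF) F -> feq G' liftF.
Proof.
  intros [H1 H2].
  assert (Hob : forall c, fo G' c = Go c).
  { intros c. rewrite <- (rep_spec c) at 1. apply H1. }
  split; auto.
  intros [w p]. destruct w as [c|f l].
  - simpl. assert (E : (exist qvalid (QId c) p : ar Qcat) = @idm Qcat c) by (apply arQ_eq; reflexivity).
    rewrite E, fa_id, Hob. reflexivity.
  - simpl. revert f p. induction l as [|g l' IH]; intros f p.
    + assert (E : (exist qvalid (QW f []) p : ar Qcat) = fa qF f)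
        by (apply arQ_eq; simpl; rewrite qa_nid; auto; apply p).
      rewrite E. apply H2.
    + assert (p' : qvalid (QW g l')) by apply p.
      rewrite (word_decomp f g l' p p'). rewrite fa_cmp.
      * rewrite IH. simpl. f_equal. apply H2.
      * simpl. destruct p as [P1 [P2 [P3 P4]]]. rewrite qa_nid by auto. simpl. apply cls_eq. auto.
Qed.
End Lift.

Lemma qF_quot : is_quotient_by R qF.
Proof.
  split.
  - intros a b H. simpl. apply cls_eq. auto.
  - intros C F HF. exists (liftF C F HF). split.
    + apply liftF_feq.
    + intros G' HG'. apply liftF_unique; auto.
Qed.

End Quot.


Definition isoP {A B : cat} (psi : functor A B) (psi' : functor B A) : Prop :=
  feq (compF psi' psi) (idF A) /\ feq (compF psi psi') (idF B).

Lemma isoP_sym {A B} (psi : functor A B) psi' : isoP psi psi' -> isoP psi' psi.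
Proof. intros [H1 H2]; split; auto. Qed.

Lemma iso_fo {A B} (psi : functor A B) psi' : isoP psi psi' -> forall a, fo psi' (fo psi a) = a.
Proof. intros [[H _] _] a. apply H. Qed.
Lemma iso_fa {A B} (psi : functor A B) psi' : isoP psi psi' -> forall f, fa psi' (fa psi f) = f.
Proof. intros [[_ H] _] a. apply H. Qed.

Lemma iso_is_id {A B} (psi : functor A B) psi' : isoP psi psi' -> forall f, is_id (fa psi f) -> is_id f.
Proof. intros Hi f H. rewrite <- (iso_fa psi psi' Hi f). apply fa_is_id. auto. Qed.

Lemma iso_irred {A B} (psi : functor A B) psi' : isoP psi psi' -> forall f, irreducible f -> irreducible (fa psi f).
Proof.
  intros Hi f [Hf Hn]. split.
  - intro H. apply Hf. apply (iso_is_id psi psi' Hi); auto.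
  - intros [g [h [Fg [Fh [Hc E]]]]]. apply Hn.
    exists (fa psi' g), (fa psi' h). pose proof (isoP_sym _ _ Hi) as Hi'.
    split; [intro H; apply Fg; apply (iso_is_id psi' psi Hi'); auto|].
    split; [intro H; apply Fh; apply (iso_is_id psi' psi Hi'); auto|].
    split; [rewrite fa_cod, fa_dom, Hc; auto|].
    rewrite <- fa_cmp by auto. rewrite <- E. symmetry. apply (iso_fa psi psi' Hi).
Qed.

Lemma nested_iso {A B} (psi : functor A B) psi' : isoP psi psi' -> nested_graph A -> nested_graph B.
Proof.
  intros Hi [n [r [Hb Hr]]]. exists n, (fun b => r (fo psi' b)). split; auto.
  intros h. cbv beta. destruct (Hr (fa psi' h)) as [H1 H2]. rewrite fa_dom, fa_cod in *. split; auto.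
  intro Hn. apply H2. intro H. apply Hn. apply (iso_is_id psi' psi (isoP_sym _ _ Hi)); auto.
Qed.

Lemma adm_post_iso {X A B} (F : functor X A) (psi : functor A B) psi' : isoP psi psi' ->
  admissible F -> admissible (compF psi F).
Proof.
  intros Hi [F1 F2]. unfold admissible, contracts in *. simpl. split.
  - intros f Hf. destruct (F1 f Hf); [left; apply fa_is_id; auto|right; apply (iso_irred psi psi' Hi); auto].
  - intros f Hf Hc g Hg Hd. apply fa_is_id. apply (F2 f Hf); auto. apply (iso_is_id psi psi' Hi); auto.
Qed.

Lemma adm_pre_iso {A B Y} (G : functor A Y) (psi' : functor B A) psi : isoP psi' psi ->
  admissible G -> admissible (compF G psi').
Proof.
  intros Hi [G1 G2]. unfold admissible, contracts in *. simpl. split.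
  - intros h Hh. apply G1. apply (iso_irred psi' psi Hi); auto.
  - intros h Hh Hc h' Hh' Hd. apply (G2 (fa psi' h)); auto.
    + apply (iso_irred psi' psi Hi); auto.
    + apply (iso_irred psi' psi Hi); auto.
    + rewrite !fa_dom, Hd. auto.
Qed.

Lemma epi_iso {A B} (psi : functor A B) psi' : isoP psi psi' -> epi_functor psi.
Proof.
  intros Hi h. apply gen_base. exists (fa psi' h). apply (iso_fa psi' psi). apply isoP_sym; auto.
Qed.

Lemma fv_feq {A B} (F G : functor A B) : feq F G -> forall Y a, fiber_vertex F Y a <-> fiber_vertex G Y a.
Proof.
  intros [H1 H2] Y a. unfold fiber_vertex. rewrite H1.
  split; intros [E N]; split; auto; intros [f [F1 F2]]; apply N; exists f;
  [rewrite H2|rewrite <- H2]; auto.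
Qed.

Lemma contraction_feq {A B} (F G : functor A B) : feq F G -> contraction F -> contraction G.
Proof.
  intros He [Ha [Hep Hf]]. split; [eapply adm_feq; eauto|]. split; [eapply epi_feq; eauto|].
  intros Y. destruct (Hf Y) as [v [Hv Hu]]. exists v. split.
  - apply (fv_feq F G He); auto.
  - intros w Hw. apply Hu. apply (fv_feq F G He); auto.
Qed.

Lemma fv_pre_iso {A B Y} (G : functor A Y) (psi' : functor B A) psi : isoP psi' psi ->
  forall Y0 b, fiber_vertex (compF G psi') Y0 b <-> fiber_vertex G Y0 (fo psi' b).
Proof.
  intros Hi Y0 b. unfold fiber_vertex. simpl. split; intros [E N]; split; auto.
  - intros [f [F1 [F2 F3]]]. apply N. exists (fa psi f). split; [|split].
    + rewrite (iso_fa psi psi'); auto. apply isoP_sym; auto.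
    + intro H. apply F2. apply (iso_is_id psi psi' (isoP_sym _ _ Hi)); auto.
    + rewrite fa_dom, F3. apply (iso_fo psi' psi); auto.
  - intros [h [F1 [F2 F3]]]. apply N. exists (fa psi' h). split; [auto|split].
    + intro H. apply F2. apply (iso_is_id psi' psi Hi); auto.
    + rewrite fa_dom, F3. auto.
Qed.

Lemma contraction_pre_iso {A B Y} (G : functor A Y) (psi' : functor B A) psi : isoP psi' psi ->
  contraction G -> contraction (compF G psi').
Proof.
  intros Hi [Ha [Hep Hf]]. split; [eapply adm_pre_iso; eauto|].
  split; [apply epi_comp; auto; apply (epi_iso psi' psi Hi)|].
  intros Y0. destruct (Hf Y0) as [v [Hv Hu]]. exists (fo psi v). split.
  - apply (fv_pre_iso G psi' psi Hi). rewrite (iso_fo psi psi'); auto. apply isoP_sym; auto.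
  - intros w Hw. apply (fv_pre_iso G psi' psi Hi) in Hw. apply Hu in Hw.
    rewrite <- Hw. symmetry. apply (iso_fo psi' psi); auto.
Qed.

Lemma quot_iso {X A B} R (q1 : functor X A) (q2 : functor X B) :
  is_quotient_by R q1 -> is_quotient_by R q2 ->
  exists psi psi', isoP psi psi' /\ feq (compF psi q1) q2 /\ feq (compF psi' q2) q1.
Proof.
  intros H1 H2.
  destruct (quot_factor R q1 q2 H1) as [psi Hpsi]; [apply H2|].
  destruct (quot_factor R q2 q1 H2) as [psi' Hpsi']; [apply H1|].
  exists psi, psi'. split; auto. split.
  - apply (quot_unique R q1); auto.
    apply feq_trans with (compF psi' (compF psi q1)); [apply feq_sym, feq_assoc|].
    apply feq_trans with (compF psi' q2); [apply feq_comp; auto; apply feq_refl|].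
    apply feq_trans with q1; auto. apply feq_sym, feq_idl.
  - apply (quot_unique R q2); auto.
    apply feq_trans with (compF psi (compF psi' q2)); [apply feq_sym, feq_assoc|].
    apply feq_trans with (compF psi q1); [apply feq_comp; auto; apply feq_refl|].
    apply feq_trans with q2; auto. apply feq_sym, feq_idl.
Qed.

Lemma canon_equiv {A B} (phi : functor A B) : equivalence_rel (canon_rel phi).
Proof.
  unfold canon_rel. split; [|split].
  - intros; left; auto.
  - intros x y [H|[E [F1 F2]]]; [left; auto|right]. rewrite <- E. auto.
  - intros x y z [H|[E [F1 F2]]] [H'|[E' [F1' F2']]].
    + left; congruence.
    + subst; right; auto.
    + subst; right; auto.
    + right. rewrite <- E in E', F2'. split; auto.
Qed.

Lemma canon_feq {A B} (F G : functor A B) : feq F G -> forall a b, canon_rel F a b <-> canon_rel G a b.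
Proof.
  intros He a b. unfold canon_rel. rewrite !(fv_feq F G He). destruct He as [H1 _].
  rewrite !H1. tauto.
Qed.

Lemma canon_contraction {A B} (k : functor A B) : contraction k -> forall a b, canon_rel k a b <-> a = b.
Proof.
  intros [_ [_ Hf]] a b. split; [|left; auto].
  intros [H|[E [F1 F2]]]; auto. destruct (Hf (fo k a)) as [v [_ Hu]].
  rewrite (Hu a F1), (Hu b F2). auto.
Qed.

Lemma merger_noncontract {A B} (mu : functor A B) : nested_graph A -> merger mu ->
  forall f, is_id (fa mu f) -> is_id f.
Proof. intros HA [_ [_ [R [_ HR]]]]. eapply quot_noncontract; eauto. Qed.

Lemma canon_merger {A B} (mu : functor A B) : nested_graph A -> merger mu ->
  forall a b, canon_rel mu a b <-> fo mu a = fo mu b.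
Proof.
  intros HA Hm a b. split.
  - intros [->|[E _]]; auto.
  - intro E. right. split; auto.
    assert (Hall : forall c, fiber_vertex mu (fo mu c) c).
    { intros c. split; auto. intros [f [F1 [F2 F3]]]. apply F2.
      eapply merger_noncontract; eauto. rewrite F1. apply is_id_idm. }
    split; auto. rewrite E. auto.
Qed.

Lemma canon_pre_iso {A B Y} (G : functor A Y) (psi' : functor B A) psi : isoP psi' psi ->
  forall a b, canon_rel (compF G psi') a b <-> canon_rel G (fo psi' a) (fo psi' b).
Proof.
  intros Hi a b. unfold canon_rel. rewrite !(fv_pre_iso G psi' psi Hi). simpl.
  assert (a = b <-> fo psi' a = fo psi' b).
  { split; intro H; [subst; auto|]. rewrite <- (iso_fo psi' psi Hi a), H. apply iso_fo; auto. }
  tauto.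
Qed.

Lemma fv_post_iso {A Y Y'} (G : functor A Y) (psi : functor Y Y') psi' : isoP psi psi' ->
  forall a, fiber_vertex (compF psi G) (fo psi (fo G a)) a <-> fiber_vertex G (fo G a) a.
Proof.
  intros Hi a. unfold fiber_vertex. simpl. split; intros [E N]; split; auto.
  - intros [f [F1 F2]]. apply N. exists f. rewrite F1, fa_id. auto.
  - intros [f [F1 F2]]. apply N. exists f. split; auto.
    rewrite <- (iso_fa psi psi' Hi (fa G f)), F1, fa_id, (iso_fo psi psi' Hi). auto.
Qed.

Lemma canon_post_iso {A Y Y'} (G : functor A Y) (psi : functor Y Y') psi' : isoP psi psi' ->
  forall a b, canon_rel (compF psi G) a b <-> canon_rel G a b.
Proof.
  intros Hi a b. unfold canon_rel. simpl.
  assert (Hab : fo psi (fo G a) = fo psi (fo G b) <-> fo G a = fo G b).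
  { split; intro H; [|rewrite H; auto]. rewrite <- (iso_fo psi psi' Hi (fo G a)), H. apply iso_fo; auto. }
  split; (intros [H|[E [F1 F2]]]; [left; auto|right]).
  - apply Hab in E. split; auto. split; [apply (fv_post_iso G psi psi' Hi); auto|].
    rewrite E. apply (fv_post_iso G psi psi' Hi). rewrite E in F2. auto.
  - split; [apply Hab; auto|]. split; [apply (fv_post_iso G psi psi' Hi); auto|].
    simpl. rewrite E. apply (fv_post_iso G psi psi' Hi). rewrite <- E. auto.
Qed.


Lemma merger_comp {X Y Z} (m1 : functor X Y) (m2 : functor Y Z) :
  merger m1 -> merger m2 -> merger (compF m2 m1).
Proof.
  intros [A1 [E1 [R1 [Q1 H1]]]] [A2 [E2 [R2 [Q2 H2]]]].
  split; [apply adm_comp; auto|]. split; [apply epi_comp; auto|].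
  exists (fun a b => R2 (fo m1 a) (fo m1 b)). split.
  - destruct Q2 as [r [s t]]. split; [|split]; eauto.
  - apply quot_comp with R1; auto. apply Q2.
Qed.

Lemma contraction_comp {X Y Z} (k1 : functor X Y) (k2 : functor Y Z) :
  nested_graph X -> nested_graph Y -> nested_graph Z ->
  contraction k1 -> contraction k2 -> contraction (compF k2 k1).
Proof.
  intros HX HY HZ [A1 [E1 F1]] [A2 [E2 F2]].
  split; [apply adm_comp; auto|]. split; [apply epi_comp; auto|].
  intros B. destruct (F2 B) as [m [[Hm1 Hm2] Hmu]]. destruct (F1 m) as [w [[Hw1 Hw2] Hwu]].
  exists w. split.
  - split; [simpl; rewrite Hw1; auto|]. intros [h [H1 [H2 H3]]]. simpl in H1.
    destruct (classic (is_id (fa k1 h))) as [Hi|Hi].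
    + apply Hw2. exists h. split; auto. rewrite (is_id_eq _ Hi), fa_dom, H3, Hw1. auto.
    + apply Hm2. exists (fa k1 h). split; auto. split; auto. rewrite fa_dom, H3. auto.
  - intros u [Hu1 Hu2]. simpl in Hu1.
    assert (Vu : fiber_vertex k1 (fo k1 u) u).
    { split; auto. intros [h [H1 [H2 H3]]]. apply Hu2. exists h. simpl. rewrite H1, fa_id, Hu1. auto. }
    assert (Vm : fiber_vertex k2 B (fo k1 u)).
    { split; auto. intros [e [H1 [H2 H3]]].
      destruct (lift_first k1 k2 HZ e (E1 e) H2) as [h [G1 [G2 G3]]].
      destruct (F1 (fo k1 u)) as [v0 [Hv0 Hv0u]].
      assert (Huv : u = v0) by (apply Hv0u; auto).
      assert (Hdh : fo k1 (dom h) = fo k1 u) by (rewrite <- fa_dom, G2; auto).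
      destruct (ftv k1 HX HY A1 (fo k1 u) u) with (h := h) as [h' [K1 K2]]; auto.
      { intros u' Hu'. rewrite Huv. apply Hv0u. auto. }
      apply Hu2. exists h'. split; [|split; auto].
      - simpl. rewrite K2. rewrite H1 in G3. specialize (G3 (is_id_idm _)).
        rewrite (is_id_eq _ G3), fa_dom, G2, H3, Hu1. auto.
      - intro Hh. apply G1. rewrite <- K2. apply fa_is_id; auto. }
    assert (fo k1 u = m) by (apply Hmu; auto). subst m.
    apply Hwu. rewrite <- H. auto.
Qed.

Section Canon.
Variables X M : cat.
Variable phi : functor X M.
Variables n1 n2 : nat.
Variable r1 : ob X -> nat.
Variable r2 : ob M -> nat.
Hypothesis Hr1 : rank_fn X n1 r1.
Hypothesis Hr2 : rank_fn M n2 r2.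
Hypothesis Hadm : admissible phi.
Hypothesis Hepi : epi_functor phi.

Definition cd (a : ob X) : nat :=
  r2 (fo phi a) * (S n1) +
  (if excluded_middle_informative (fiber_vertex phi (fo phi a) a) then n1 else r1 a).

Lemma cd_bound a : cd a < n2 * S n1.
Proof.
  unfold cd. destruct Hr2 as [B2 _]. destruct Hr1 as [B1 _]. specialize (B2 (fo phi a)).
  specialize (B1 a). destruct (excluded_middle_informative _); nia.
Qed.

Lemma cd_R a b : canon_rel phi a b -> cd a = cd b.
Proof.
  intros [->|[E [F1 F2]]]; auto. unfold cd. rewrite <- E.
  destruct (excluded_middle_informative (fiber_vertex phi (fo phi a) a)); [|tauto].
  destruct (excluded_middle_informative (fiber_vertex phi (fo phi a) b)); [|tauto]. auto.
Qed.

Lemma cd_mono (f : ar X) : cd (dom f) <= cd (cod f) /\ (~ is_id f -> cd (dom f) < cd (cod f)).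
Proof.
  destruct (classic (is_id f)) as [Hf|Hf].
  - rewrite (is_id_domcod f Hf). split; auto. tauto.
  - cut (cd (dom f) < cd (cod f)); [intro; split; auto; lia|].
    destruct Hr1 as [B1 R1]. destruct Hr2 as [B2 R2]. unfold cd.
    destruct (classic (is_id (fa phi f))) as [Hp|Hp].
    + assert (Ep : fo phi (dom f) = fo phi (cod f))
        by (rewrite <- fa_dom, <- fa_cod; apply is_id_domcod; auto).
      destruct (excluded_middle_informative (fiber_vertex phi (fo phi (dom f)) (dom f))) as [[_ N]|N].
      * exfalso. apply N. exists f. split; auto. rewrite (is_id_eq _ Hp), fa_dom. auto.
      * rewrite Ep. pose proof (proj2 (R1 f) Hf). specialize (B1 (cod f)).
        destruct (excluded_middle_informative _); lia.
    + pose proof (proj2 (R2 (fa phi f)) Hp). rewrite fa_dom, fa_cod in H.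
      assert (r2 (fo phi (dom f)) * S n1 + S n1 <= r2 (fo phi (cod f)) * S n1) by nia.
      pose proof (B1 (dom f)).
      destruct (excluded_middle_informative (fiber_vertex phi (fo phi (dom f)) (dom f)));
      destruct (excluded_middle_informative (fiber_vertex phi (fo phi (cod f)) (cod f))); lia.
Qed.

Definition QC := Qcat X (canon_rel phi) (canon_equiv phi) cd cd_mono.
Definition qC : functor X QC := qF X (canon_rel phi) (canon_equiv phi) cd cd_mono.
Lemma phi_resp : forall a b, canon_rel phi a b -> fo phi a = fo phi b.
Proof. intros a b [->|[E _]]; auto. Qed.
Definition kC : functor QC M := liftF X (canon_rel phi) (canon_equiv phi) cd cd_mono M phi phi_resp.

Lemma kC_feq : feq (compF kC qC) phi.
Proof. apply liftF_feq. Qed.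

Lemma canonC : canonical_decomposition phi kC qC.
Proof. split; [apply qF_quot; apply canon_equiv|apply kC_feq]. Qed.

Lemma QC_nested : nested_graph QC.
Proof. apply (Q_nested X (canon_rel phi) (canon_equiv phi) cd (n2 * S n1) cd_bound cd_mono cd_R). Qed.

Lemma qC_merger : merger qC.
Proof.
  split; [split|split].
  - intros f Hf. right. apply qF_irred; auto.
  - intros f Hf Hc. exfalso. apply (proj1 Hf). eapply qF_is_id. apply Hc.
  - apply qF_epi.
  - exists (canon_rel phi). split; [apply canon_equiv|apply qF_quot; apply canon_equiv].
Qed.

Lemma kC_q (f : ar X) : fa kC (fa qC f) = fa phi f.
Proof. apply (proj2 kC_feq). Qed.
Lemma kC_qo (a : ob X) : fo kC (fo qC a) = fo phi a.
Proof. apply (proj1 kC_feq). Qed.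

Lemma kC_contraction : contraction kC.
Proof.
  split; [split|split].
  - intros W HW. destruct (Q_irred_char X (canon_rel phi) (canon_equiv phi) cd cd_mono W HW) as [f [Hf ->]].
    fold qC. rewrite kC_q. apply Hadm; auto.
  - intros W HW Hc V HV Hd.
    destruct (Q_irred_char X (canon_rel phi) (canon_equiv phi) cd cd_mono W HW) as [f [Hf ->]].
    destruct (Q_irred_char X (canon_rel phi) (canon_equiv phi) cd cd_mono V HV) as [g [Hg ->]].
    fold qC in *. unfold contracts in *. rewrite kC_q in *.
    rewrite !fa_dom in Hd. simpl in Hd. apply cls_eq in Hd; [|apply canon_equiv].
    destruct Hd as [Hd|[E [F1 F2]]].
    + apply (proj2 Hadm f Hf Hc g Hg Hd).
    + exfalso. destruct F2 as [_ N]. apply N. exists f. split; [|split; auto; apply Hf].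
      rewrite (is_id_eq _ Hc), fa_dom, E. auto.
  - intros h. apply gen_mono with (img phi); [|apply Hepi].
    intros h' [f <-]. exists (fa qC f). apply kC_q.
  - intros B. destruct (epi_surj phi Hepi B) as [a <-].
    destruct (fv_exists phi (ex_intro _ n1 (ex_intro _ r1 Hr1)) a) as [v Hv].
    assert (HvB : fo phi v = fo phi a) by apply Hv.
    exists (fo qC v). split.
    + split; [rewrite kC_qo; auto|]. intros [W [W1 [W2 W3]]].
      destruct (lift_first qC kC (ex_intro _ n2 (ex_intro _ r2 Hr2)) W (qF_epi _ _ _ _ _ W) W2)
        as [f [G1 [G2 G3]]].
      rewrite W1 in G3. specialize (G3 (is_id_idm _)). rewrite kC_q in G3.
      rewrite W3, fa_dom in G2. simpl in G2. apply cls_eq in G2; [|apply canon_equiv].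
      assert (Hf : ~ is_id f) by (intro H; apply G1; apply fa_is_id; auto).
      destruct G2 as [G2|[E [F1 F2]]].
      * destruct Hv as [_ N]. apply N. exists f. split; [|split; auto].
        rewrite (is_id_eq _ G3), fa_dom, G2, HvB. auto.
      * destruct F1 as [_ N]. apply N. exists f. split; [|split; auto].
        rewrite (is_id_eq _ G3), fa_dom. auto.
    + intros w [Hw1 Hw2]. rewrite <- (rep_spec X (canon_rel phi) w) in *.
      set (a' := rep X (canon_rel phi) w) in *.
      change (cls X (canon_rel phi) a') with (fo qC a') in *. rewrite kC_qo in Hw1.
      destruct (classic (fiber_vertex phi (fo phi a) a')) as [Ha'|Ha'].
      * apply (cls_eq X (canon_rel phi) (canon_equiv phi)). right.
        split; [rewrite Hw1, HvB; auto|]. split; rewrite Hw1; auto.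
      * exfalso. rewrite <- Hw1 in Ha'.
        assert (Hex : exists f, fa phi f = idm (fo phi a') /\ flag f /\ dom f = a').
        { apply NNPP. intro N. apply Ha'. split; auto. }
        destruct Hex as [f [H1 [H2 H3]]]. apply Hw2. exists (fa qC f). split; [|split].
        -- rewrite kC_q, H1, Hw1. auto.
        -- intro H. apply H2. eapply qF_is_id. apply H.
        -- rewrite fa_dom, H3. auto.
Qed.

End Canon.

Lemma dec_exists {X M} (phi : functor X M) : nested_graph X -> nested_graph M ->
  admissible phi -> epi_functor phi ->
  exists (N' : cat) (k : functor N' M) (m : functor X N'), canonical_decomposition phi k m.
Proof.
  intros [n1 [r1 H1]] [n2 [r2 H2]] Ha He.
  exists (QC X M phi n1 n2 r1 r2 H1 H2), (kC X M phi n1 n2 r1 r2 H1 H2), (qC X M phi n1 n2 r1 r2 H1 H2).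
  apply canonC.
Qed.

Lemma dec_props {X M} (phi : functor X M) : nested_graph X -> nested_graph M ->
  admissible phi -> epi_functor phi ->
  forall (N' : cat) (k : functor N' M) (m : functor X N'), canonical_decomposition phi k m ->
  nested_graph N' /\ merger m /\ contraction k.
Proof.
  intros HX HM Ha He N' k m [Hq Hk]. pose proof HX as [n1 [r1 H1]]. pose proof HM as [n2 [r2 H2]].
  set (Q := QC X M phi n1 n2 r1 r2 H1 H2).
  set (q := qC X M phi n1 n2 r1 r2 H1 H2).
  set (kc := kC X M phi n1 n2 r1 r2 H1 H2).
  assert (Hqq : is_quotient_by (canon_rel phi) q) by (apply canonC).
  destruct (quot_iso (canon_rel phi) q m Hqq Hq) as [psi [psi' [Hi [E1 E2]]]].
  split; [|split].
  - apply (nested_iso psi psi' Hi). apply (QC_nested X M phi n1 n2 r1 r2 H1 H2).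
  - split; [|split].
    + apply adm_feq with (compF psi q); auto. apply (adm_post_iso q psi psi' Hi).
      apply (qC_merger X M phi n1 n2 r1 r2 H1 H2).
    + apply epi_feq with (compF psi q); auto. apply epi_comp; [apply (proj1 (proj2 (qC_merger X M phi n1 n2 r1 r2 H1 H2)))|apply (epi_iso psi psi' Hi)].
    + exists (canon_rel phi). split; auto. apply canon_equiv.
  - apply contraction_feq with (compF kc psi').
    + apply (quot_unique (canon_rel phi) m); auto.
      apply feq_trans with (compF kc (compF psi' m)); [apply feq_sym, feq_assoc|].
      apply feq_trans with (compF kc q); [apply feq_comp; auto; apply feq_refl|].
      apply feq_trans with phi; [apply (kC_feq X M phi n1 n2 r1 r2 H1 H2)|apply feq_sym; auto].
    + apply (contraction_pre_iso kc psi' psi (isoP_sym _ _ Hi)). apply (kC_contraction X M phi n1 n2 r1 r2 H1 H2); auto.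
Qed.


Lemma pe_refl {N1 N3} (p : mpair N1 N3) : pair_equiv p p.
Proof.
  exists (idF _). split; [|split; split; intros; reflexivity].
  exists (idF _). split; split; intros; reflexivity.
Qed.

Lemma pe_sym {N1 N3} (p q : mpair N1 N3) : pair_equiv p q -> pair_equiv q p.
Proof.
  intros [phi [[G [[G1 G2] [G3 G4]]] [[M1 M2] [K1 K2]]]].
  exists G. split; [exists phi; split; split; auto|]. simpl in *.
  split; split; intros.
  - simpl. rewrite <- M1. apply G1.
  - simpl. rewrite <- M2. apply G2.
  - simpl. rewrite K1. simpl. rewrite G3. auto.
  - simpl. rewrite K2. simpl. rewrite G4. auto.
Qed.

Lemma pe_trans {N1 N3} (p q r : mpair N1 N3) : pair_equiv p q -> pair_equiv q r -> pair_equiv p r.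
Proof.
  intros [phi [[G [[G1 G2] [G3 G4]]] [[M1 M2] [K1 K2]]]]
         [phi' [[G' [[G1' G2'] [G3' G4']]] [[M1' M2'] [K1' K2']]]].
  simpl in *. exists (compF phi' phi). split; [exists (compF G G'); split; split; intros; simpl|].
  - rewrite G1'. apply G1.
  - rewrite G2'. apply G2.
  - rewrite G3. apply G3'.
  - rewrite G4. apply G4'.
  - split; split; intros; simpl.
    + rewrite M1. apply M1'.
    + rewrite M2. apply M2'.
    + rewrite K1. apply K1'.
    + rewrite K2. apply K2'.
Qed.

Lemma id_quot (X : cat) : is_quotient_by eq (idF X).
Proof.
  split; [intros; subst; auto|]. intros C F HF. exists F. split; [split; intros; reflexivity|].
  intros G' H. exact H.
Qed.

Lemma id_valid (N : cat) : nested_graph N -> valid_pair (id_pair N).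
Proof.
  intros HN. split; auto. simpl. split.
  - split; [|split].
    + split; [intros; right; auto|intros f Hf Hc; exfalso; apply (proj1 Hf); auto].
    + intros h. apply gen_base. exists h. reflexivity.
    + exists eq. split; [split; [|split]; intros; subst; auto|apply id_quot].
  - split; [|split].
    + split; [intros; right; auto|intros f Hf Hc; exfalso; apply (proj1 Hf); auto].
    + intros h. apply gen_base. exists h. reflexivity.
    + intros B. exists B. split.
      * split; auto. intros [f [F1 [F2 F3]]]. apply F2. simpl in F1. rewrite F1. apply is_id_idm.
      * intros w [W1 _]. auto.
Qed.

Lemma valid_parts {N1 N3} (p : mpair N1 N3) :
  valid_pair p -> nested_graph (mid p) /\ merger (mmu p) /\ contraction (mka p).
Proof. auto. Qed.

Lemma middle_adm {N1 N3 N5} (p1 : mpair N1 N3) (p2 : mpair N3 N5) :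
  valid_pair p1 -> valid_pair p2 -> admissible (middle p1 p2) /\ epi_functor (middle p1 p2).
Proof.
  intros [_ [_ [K1 [E1 _]]]] [_ [[A2 [E2 _]] _]]. split.
  - apply adm_comp; auto.
  - apply epi_comp; auto.
Qed.

Lemma comp_valid {N1 N3 N5} (p1 : mpair N1 N3) (p2 : mpair N3 N5) :
  nested_graph N5 -> valid_pair p1 -> valid_pair p2 ->
  forall (N' : cat) (k : functor N' (mid p2)) (m : functor (mid p1) N'),
  canonical_decomposition (middle p1 p2) k m ->
  nested_graph N' /\ merger m /\ contraction k /\ valid_pair (comp_pair p1 p2 N' k m).
Proof.
  intros H5 V1 V2 N' k m Hd. destruct (middle_adm p1 p2 V1 V2) as [Ha He].
  destruct V1 as [HM1 [Mu1 K1]]. destruct V2 as [HM2 [Mu2 K2]].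
  destruct (dec_props _ HM1 HM2 Ha He N' k m Hd) as [HN [Hm Hk]].
  split; auto. split; auto. split; auto. split; [|split]; simpl; auto.
  - apply merger_comp; auto.
  - apply contraction_comp; auto.
Qed.

Lemma comp_quot {N1 N3 N5} (p1 : mpair N1 N3) (p2 : mpair N3 N5) N' k m :
  valid_pair p1 -> canonical_decomposition (middle p1 p2) k m ->
  exists R1, equivalence_rel R1 /\ is_quotient_by R1 (mmu p1) /\
  is_quotient_by (fun a b => canon_rel (middle p1 p2) (fo (mmu p1) a) (fo (mmu p1) b))
    (mmu (comp_pair p1 p2 N' k m)).
Proof.
  intros [_ [[_ [Ep [R1 [HR1 Q1]]]] _]] [Hq _]. exists R1. split; auto. split; auto.
  simpl. apply quot_comp with R1; auto. intros; left; auto.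
Qed.


Lemma comp_welldef {N1 N3 N5} (p1 p1' : mpair N1 N3) (p2 p2' : mpair N3 N5) (r r' : mpair N1 N5) :
  valid_pair p1 -> valid_pair p1' ->
  pair_equiv p1 p1' -> pair_equiv p2 p2' -> is_composite p1 p2 r -> is_composite p1' p2' r' ->
  pair_equiv r r'.
Proof.
  intros V1 V1' [s1 [[s1' Hi1] [Em1 Ek1]]] [s2 [[s2' Hi2] [Em2 Ek2]]]
    [N' [k [m [Hd ->]]]] [N'' [k' [m' [Hd' ->]]]].
  destruct (comp_quot p1 p2 N' k m V1 Hd) as [R1 [HR1 [Q1 Qr]]].
  destruct (comp_quot p1' p2' N'' k' m' V1' Hd') as [R1' [HR1' [Q1' Qr']]].
  destruct Hd as [_ [Hdo Hda]]. destruct Hd' as [_ [Hdo' Hda']].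
  destruct Em1 as [Em1o Em1a]. destruct Ek1 as [Ek1o Ek1a].
  destruct Em2 as [Em2o Em2a]. destruct Ek2 as [Ek2o Ek2a].
  simpl in *.
  apply (pair_equiv_of (comp_pair p1 p2 N' k m) (comp_pair p1' p2' N'' k' m') _ _ Qr Qr').
  - intros a b. rewrite <- !Em1o.
    rewrite <- (canon_pre_iso (middle p1' p2') s1 s1' Hi1).
    rewrite (canon_feq (compF (middle p1' p2') s1) (compF s2 (middle p1 p2))).
    + rewrite (canon_post_iso (middle p1 p2) s2 s2' Hi2). tauto.
    + split; intros; simpl; [rewrite <- Ek1o, Em2o|rewrite <- Ek1a, Em2a]; auto.
  - split; intros; simpl.
    + rewrite Hdo, Hdo', <- Em1o, <- Ek1o, <- Em2o, <- Ek2o. auto.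
    + rewrite Hda, Hda', <- Em1a, <- Ek1a, <- Em2a, <- Ek2a. auto.
Qed.

Lemma unit_right {N1 N3} (p : mpair N1 N3) (r : mpair N1 N3) :
  valid_pair p -> is_composite p (id_pair N3) r -> pair_equiv r p.
Proof.
  intros V [N' [k [m [Hd ->]]]].
  destruct (comp_quot p (id_pair N3) N' k m V Hd) as [R1 [HR1 [Q1 Qr]]].
  destruct V as [HM [Hmu Hk]]. destruct Hd as [_ [Hdo Hda]]. simpl in *.
  apply (pair_equiv_of (comp_pair p (id_pair N3) N' k m) p _ _ Qr Q1).
  - intros a b. rewrite (canon_feq (middle p (id_pair N3)) (mka p)) by (split; intros; reflexivity).
    rewrite (canon_contraction _ Hk). apply quot_kernel; auto.
  - split; intros; simpl; [rewrite Hdo|rewrite Hda]; auto.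
Qed.

Lemma unit_left {N1 N3} (p : mpair N1 N3) (r : mpair N1 N3) :
  nested_graph N1 -> valid_pair p -> is_composite (id_pair N1) p r -> pair_equiv r p.
Proof.
  intros HN V [N' [k [m [Hd ->]]]].
  destruct (comp_quot (id_pair N1) p N' k m (id_valid N1 HN) Hd) as [R1 [HR1 [Q1 Qr]]].
  destruct V as [HM [Hmu Hk]]. pose proof Hmu as [_ [_ [Rp [HRp Qp]]]].
  destruct Hd as [_ [Hdo Hda]]. simpl in *.
  apply (pair_equiv_of (comp_pair (id_pair N1) p N' k m) p _ _ Qr Qp).
  - intros a b. rewrite (canon_feq (middle (id_pair N1) p) (mmu p)) by (split; intros; reflexivity).
    rewrite (canon_merger _ HN Hmu). apply quot_kernel; auto.
  - split; intros; simpl; [rewrite Hdo|rewrite Hda]; auto.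
Qed.


Section Key.
Variables M1 M2 M3 N' Y : cat.
Variable phi1 : functor M1 M2.
Variable theta : functor M2 M3.
Variable k : functor N' M2.
Variable m : functor M1 N'.
Variable ka : functor Y M3.
Variable ma : functor M2 Y.
Hypothesis HM1 : nested_graph M1.
Hypothesis HM2 : nested_graph M2.
Hypothesis HM3 : nested_graph M3.
Hypothesis HN : nested_graph N'.
Hypothesis Hd1 : canonical_decomposition phi1 k m.
Hypothesis Hm : merger m.
Hypothesis Hk : contraction k.
Hypothesis Hda : canonical_decomposition theta ka ma.
Hypothesis Hma : merger ma.

Lemma K1 x y : fo m x = fo m y <-> canon_rel phi1 x y.
Proof. apply quot_kernel; [apply canon_equiv|apply Hd1]. Qed.
Lemma K2 u v : fo ma u = fo ma v <-> canon_rel theta u v.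
Proof. apply quot_kernel; [apply canon_equiv|apply Hda]. Qed.
Lemma F1o x : fo k (fo m x) = fo phi1 x.
Proof. apply (proj1 (proj2 Hd1)). Qed.
Lemma F1a f : fa k (fa m f) = fa phi1 f.
Proof. apply (proj2 (proj2 Hd1)). Qed.

Lemma lemV x : fiber_vertex phi1 (fo phi1 x) x -> fiber_vertex k (fo phi1 x) (fo m x).
Proof.
  intros [_ Nx]. split; [apply F1o|]. intros [h [H1 [H2 H3]]].
  destruct (lift_first m k HM2 h (proj1 (proj2 Hm) h) H2) as [f [G1 [G2 G3]]].
  rewrite H1 in G3. specialize (G3 (is_id_idm _)). rewrite F1a in G3.
  rewrite H3, fa_dom in G2. apply K1 in G2.
  assert (Hf : ~ is_id f) by (intro H; apply G1; apply fa_is_id; auto).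
  destruct G2 as [G2|[E [Fa Fb]]].
  - apply Nx. exists f. split; [|split; auto]. rewrite (is_id_eq _ G3), fa_dom, G2. auto.
  - destruct Fa as [_ N]. apply N. exists f. split; [|split; auto]. rewrite (is_id_eq _ G3), fa_dom. auto.
Qed.

Definition psi := compF theta k.
Definition Phi := compF ma phi1.

Lemma psi_m x : fo psi (fo m x) = fo theta (fo phi1 x).
Proof. unfold psi. simpl. rewrite F1o. auto. Qed.

Lemma lemT x : fiber_vertex phi1 (fo phi1 x) x -> fiber_vertex Phi (fo Phi x) x.
Proof.
  intros [_ N]. split; auto. intros [f [H1 [H2 H3]]]. apply N. exists f. split; auto.
  assert (is_id (fa phi1 f)).
  { apply (merger_noncontract ma HM2 Hma). unfold Phi in H1. simpl in H1. rewrite H1. apply is_id_idm. }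
  rewrite (is_id_eq _ H), fa_dom, H3. auto.
Qed.

Lemma lemPhi1 x : fiber_vertex Phi (fo Phi x) x -> fiber_vertex phi1 (fo phi1 x) x.
Proof.
  intros [_ N]. split; auto. intros [f [H1 [H2 H3]]]. apply N. exists f.
  unfold Phi. simpl. rewrite H1, fa_id. auto.
Qed.

Lemma lemS x : fiber_vertex phi1 (fo phi1 x) x -> fiber_vertex theta (fo theta (fo phi1 x)) (fo phi1 x) ->
  fiber_vertex psi (fo psi (fo m x)) (fo m x).
Proof.
  intros Vx [_ Nt]. split; auto. intros [h [H1 [H2 H3]]].
  assert (Hdk : dom (fa k h) = fo phi1 x) by (rewrite fa_dom, H3; apply F1o).
  destruct (classic (is_id (fa k h))) as [Hi|Hi].
  - destruct (lemV x Vx) as [_ Nk]. apply Nk. exists h. split; auto.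
    rewrite (is_id_eq _ Hi), Hdk. auto.
  - apply Nt. exists (fa k h). split; auto. unfold psi in H1. simpl in H1. rewrite H1, F1o. auto.
Qed.

Lemma lemU x : fiber_vertex psi (fo psi (fo m x)) (fo m x) -> fiber_vertex phi1 (fo phi1 x) x.
Proof.
  intros [_ N]. split; auto. intros [f [H1 [H2 H3]]]. apply N. exists (fa m f). split; [|split].
  - unfold psi. simpl. rewrite F1a, H1, fa_id, F1o. auto.
  - intro H. apply H2. apply (merger_noncontract m HM1 Hm). auto.
  - rewrite fa_dom, H3. auto.
Qed.

Lemma lemW x : fiber_vertex psi (fo psi (fo m x)) (fo m x) ->
  fiber_vertex theta (fo theta (fo phi1 x)) (fo phi1 x).
Proof.
  intros Vp. pose proof (lemU x Vp) as Vx. pose proof (lemV x Vx) as Vk.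
  split; auto. intros [e [H1 [H2 H3]]].
  destruct Hk as [Ak [Ek Fk]].
  destruct (lift_first k theta HM3 e (Ek e) H2) as [h [G1 [G2 G3]]].
  rewrite H1 in G3. specialize (G3 (is_id_idm _)).
  destruct (Fk (fo phi1 x)) as [v0 [Hv0 Hv0u]].
  assert (Hmv : fo m x = v0) by (apply Hv0u; auto).
  destruct (ftv k HN HM2 Ak (fo phi1 x) (fo m x)) with (h := h) as [h' [K1' K2']]; auto.
  - intros u Hu. rewrite Hmv. auto.
  - rewrite <- fa_dom, G2. auto.
  - destruct Vp as [_ N]. apply N. exists h'. split; [|split; auto].
    + unfold psi. simpl. rewrite K2'. rewrite (is_id_eq _ G3), fa_dom, G2, H3, F1o. auto.
    + intro Hh. apply G1. rewrite <- K2'. apply fa_is_id; auto.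
Qed.

Lemma assoc_key x y : canon_rel psi (fo m x) (fo m y) <-> canon_rel Phi x y.
Proof.
  split.
  - intros [E|[E [Vx Vy]]].
    + apply K1 in E. destruct E as [E|[E [Vx Vy]]]; [left; auto|right].
      split; [unfold Phi; simpl; rewrite E; auto|]. split; [apply lemT; auto|].
      assert (fo Phi x = fo Phi y) by (unfold Phi; simpl; rewrite E; auto).
      rewrite H. apply lemT. rewrite <- E. auto.
    + assert (Vy' : fiber_vertex psi (fo psi (fo m y)) (fo m y)) by (rewrite <- E; auto).
      pose proof (lemU x Vx) as Ux. pose proof (lemU y Vy') as Uy.
      pose proof (lemW x Vx) as Wx. pose proof (lemW y Vy') as Wy.
      rewrite !psi_m in E.
      assert (EP : fo Phi x = fo Phi y).
      { unfold Phi. simpl. apply K2. right. split; auto. split; auto. rewrite E. auto. }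
      right. split; auto. split; [apply lemT; auto|]. rewrite EP. apply lemT; auto.
  - intros [E|[E [Vx Vy]]]; [subst; left; auto|].
    assert (Vy' : fiber_vertex Phi (fo Phi y) y) by (rewrite <- E; auto).
    pose proof (lemPhi1 x Vx) as Px. pose proof (lemPhi1 y Vy') as Py.
    destruct (classic (fo phi1 x = fo phi1 y)) as [Ep|Ep].
    + left. apply K1. right. split; auto. split; auto. rewrite Ep. auto.
    + unfold Phi in E. simpl in E. apply K2 in E. destruct E as [E|[E [Tx Ty]]]; [tauto|].
      assert (Ty' : fiber_vertex theta (fo theta (fo phi1 y)) (fo phi1 y)) by (rewrite <- E; auto).
      right. rewrite !psi_m. split; auto. split.
      * rewrite <- psi_m. apply lemS; auto.
      * rewrite E, <- psi_m. apply lemS; auto.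
Qed.
End Key.


Lemma comp_assoc {N1 N2 N3 N4 : cat} (p1 : mpair N1 N2) (p2 : mpair N2 N3) (p3 : mpair N3 N4)
          (p12 : mpair N1 N3) (p23 : mpair N2 N4) (q q' : mpair N1 N4) :
     nested_graph N3 -> nested_graph N4 ->
     valid_pair p1 -> valid_pair p2 -> valid_pair p3 ->
     is_composite p1 p2 p12 -> is_composite p12 p3 q ->
     is_composite p2 p3 p23 -> is_composite p1 p23 q' ->
     pair_equiv q q'.
Proof.
  intros H3 H4 V1 V2 V3 [N' [k [m [Hd ->]]]] [N'' [k'' [m'' [Hd'' ->]]]]
    [Na [ka [ma [Hda ->]]]] [Nb [kb [mb [Hdb ->]]]].
  destruct (comp_valid p1 p2 H3 V1 V2 N' k m Hd) as [HN [Hm [Hk V12]]].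
  destruct (comp_valid p2 p3 H4 V2 V3 Na ka ma Hda) as [HNa [Hma [Hka V23]]].
  destruct (comp_quot _ p3 N'' k'' m'' V12 Hd'') as [R1 [HR1 [Q1 Qr]]].
  destruct (comp_quot p1 _ Nb kb mb V1 Hdb) as [R1' [HR1' [Q1' Qr']]].
  pose proof V1 as [HM1 _]. pose proof V2 as [HM2 _]. pose proof V3 as [HM3 _].
  pose proof (assoc_key _ _ _ _ _ (middle p1 p2) (middle p2 p3) k m ka ma HM1 HM2 HM3 HN Hd Hm Hk Hda Hma)
    as KEY.
  apply (pair_equiv_of (comp_pair (comp_pair p1 p2 N' k m) p3 N'' k'' m'')
                       (comp_pair p1 (comp_pair p2 p3 Na ka ma) Nb kb mb) _ _ Qr Qr').
  - intros a b. simpl.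
    rewrite (canon_feq (middle (comp_pair p1 p2 N' k m) p3) (psi _ _ _ (middle p2 p3) k))
      by (split; intros; reflexivity).
    rewrite KEY.
    apply canon_feq. split; intros; reflexivity.
  - destruct Hd as [_ [Hdo Hda1]]. destruct Hd'' as [_ [Hdo'' Hda'']].
    destruct Hda as [_ [Hao Haa]]. destruct Hdb as [_ [Hbo Hba]]. simpl in *.
    split; intros; simpl.
    + rewrite Hdo'', Hdo, Hbo, Hao. auto.
    + rewrite Hda'', Hda1, Hba, Haa. auto.
Qed.

Theorem mainTheorem4 :
  (* the equivalence of pairs is an equivalence relation *)
  (forall (N1 N3 : cat) (p : mpair N1 N3), pair_equiv p p) /\
  (forall (N1 N3 : cat) (p q : mpair N1 N3), pair_equiv p q -> pair_equiv q p) /\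
  (forall (N1 N3 : cat) (p q r : mpair N1 N3),
     pair_equiv p q -> pair_equiv q r -> pair_equiv p r) /\
  (* identities are morphisms *)
  (forall N : cat, nested_graph N -> valid_pair (id_pair N)) /\
  (* composition is defined and yields a morphism *)
  (forall (N1 N3 N5 : cat) (p1 : mpair N1 N3) (p2 : mpair N3 N5),
     nested_graph N1 -> nested_graph N3 -> nested_graph N5 ->
     valid_pair p1 -> valid_pair p2 ->
     admissible (middle p1 p2) /\ epi_functor (middle p1 p2) /\
     (exists (N' : cat) (kappa' : functor N' (mid p2)) (mu' : functor (mid p1) N'),
        canonical_decomposition (middle p1 p2) kappa' mu') /\
     (forall (N' : cat) (kappa' : functor N' (mid p2)) (mu' : functor (mid p1) N'),
        canonical_decomposition (middle p1 p2) kappa' mu' ->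
        nested_graph N' /\ merger mu' /\ contraction kappa' /\
        valid_pair (comp_pair p1 p2 N' kappa' mu'))) /\
  (* composition is well defined on equivalence classes *)
  (forall (N1 N3 N5 : cat) (p1 p1' : mpair N1 N3) (p2 p2' : mpair N3 N5)
          (r r' : mpair N1 N5),
     nested_graph N1 -> nested_graph N3 -> nested_graph N5 ->
     valid_pair p1 -> valid_pair p1' -> valid_pair p2 -> valid_pair p2' ->
     pair_equiv p1 p1' -> pair_equiv p2 p2' ->
     is_composite p1 p2 r -> is_composite p1' p2' r' -> pair_equiv r r') /\
  (* left and right unit laws *)
  (forall (N1 N3 : cat) (p : mpair N1 N3) (r : mpair N1 N3),
     nested_graph N1 -> nested_graph N3 -> valid_pair p ->
     is_composite p (id_pair N3) r -> pair_equiv r p) /\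
  (forall (N1 N3 : cat) (p : mpair N1 N3) (r : mpair N1 N3),
     nested_graph N1 -> nested_graph N3 -> valid_pair p ->
     is_composite (id_pair N1) p r -> pair_equiv r p) /\
  (* associativity *)
  (forall (N1 N2 N3 N4 : cat) (p1 : mpair N1 N2) (p2 : mpair N2 N3) (p3 : mpair N3 N4)
          (p12 : mpair N1 N3) (p23 : mpair N2 N4) (q q' : mpair N1 N4),
     nested_graph N1 -> nested_graph N2 -> nested_graph N3 -> nested_graph N4 ->
     valid_pair p1 -> valid_pair p2 -> valid_pair p3 ->
     is_composite p1 p2 p12 -> is_composite p12 p3 q ->
     is_composite p2 p3 p23 -> is_composite p1 p23 q' ->
     pair_equiv q q').
Proof.
  split; [intros; apply pe_refl|].
  split; [intros; apply pe_sym; auto|].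
  split; [intros; eapply pe_trans; eauto|].
  split; [intros; apply id_valid; auto|].
  split.
  { intros N1 N3 N5 p1 p2 H1 H3 H5 V1 V2. destruct (middle_adm p1 p2 V1 V2) as [Ha He].
    split; auto. split; auto. split.
    - destruct V1 as [HM1 _]. destruct V2 as [HM2 _]. apply dec_exists; auto.
    - intros N' k m Hd. apply comp_valid; auto. }
  split.
  { intros N1 N3 N5 p1 p1' p2 p2' r r' H1 H3 H5 V1 V1' V2 V2' E1 E2 C1 C2.
    apply (comp_welldef p1 p1' p2 p2' r r' V1 V1' E1 E2 C1 C2). }
  split; [intros; eapply unit_right; eauto|].
  split; [intros; eapply unit_left; eauto|].
  intros N1 N2 N3 N4 p1 p2 p3 p12 p23 q q' H1 H2 H3 H4 V1 V2 V3 C1 C2 C3 C4.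
  apply (comp_assoc p1 p2 p3 p12 p23 q q' H3 H4 V1 V2 V3 C1 C2 C3 C4).
Qed.
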